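(* Fix $n\in\mathbb{N}$ and consider unknown complex-valued functions $f_j$ $(0\le j\le n+1)$, $\psi_l,\varphi_l$ $(0\le l\le n)$, with the convention that $f_j,\psi_l,\varphi_l$ are zero for indices outside these ranges, and set (where $f_{n+1}\ne0$) $$a=\frac{\psi_n}{f_{n+1}},\quad b=-\frac{\varphi_n}{f_{n+1}},\quad c=2i\Big(\frac{\psi_nf_n}{f_{n+1}^2}-\frac{\psi_{n-1}}{f_{n+1}}\Big),\quad d=2i\Big(\frac{\varphi_nf_n}{f_{n+1}^2}-\frac{\varphi_{n-1}}{f_{n+1}}\Big).$$ Consider the autonomous system of ODEs in $t$ $$\dot f_j=d\psi_j-c\varphi_j+2ib\psi_{j-1}+2ia\varphi_{j-1}\ (0\le j\le n+1),$$ $$\dot\psi_l=-2cf_l+4iaf_{l-1}+2iab\psi_l-4i\psi_{l-2},\quad \dot\varphi_l=2df_l+4ibf_{l-1}-2iab\varphi_l+4i\varphi_{l-2}\ (0\le l\le n),$$ and the autonomous system of ODEs in $x$ $$f_j'=ib\psi_j+ia\varphi_j\ (0\le j\le n+1),\quad \psi_l'=2iaf_l-2i\psi_{l-1},\quad \varphi_l'=2ibf_l+2i\varphi_{l-1}\ (0\le l\le n).$$ Suppose the initial data (with $f_{n+1}\neq0$) satisfy the symmetry conditions $f_j=\overline{f_j}$ for all $j$ and $\varphi_l=-\overline{\psi_l}$ for all $l$. Then the system in $t$ has a solution defined for all $t\in\mathbb{R}$, and likewise the system in $x$ has a solution defined for all $x\in\mathbb{R}$; these solutions satisfy $f_j=\overline{f_j}$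 and $\varphi_l=-\overline{\psi_l}$ for all $t$ (respectively all $x$). *)

(* Defs.v *)
From Stdlib Require Export Reals.
From Coquelicot Require Export Coquelicot.
Open Scope R_scope.

(* A state: sequences indexed by nat; the convention "zero outside the
   index range" for negative indices is implemented by [sh]. *)
Definition sh (k : nat) (g : nat -> C) (l : nat) : C :=
  if (l <? k)%nat then 0%C else g (l - k)%nat.

Definition coef_a (n : nat) (f psi phi : nat -> C) : C :=
  (psi n / f (S n))%C.
Definition coef_b (n : nat) (f psi phi : nat -> C) : C :=
  (- (phi n / f (S n)))%C.
Definition coef_c (n : nat) (f psi phi : nat -> C) : C :=
  (2 * Ci * (psi n * f n / (f (S n) * f (S n)) - sh 1 psi n / f (S n)))%C.
Definition coef_d (n : nat) (f psi phi : nat -> C) : C :=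
  (2 * Ci * (phi n * f n / (f (S n) * f (S n)) - sh 1 phi n / f (S n)))%C.

Definition rhs_t_f (n : nat) (f psi phi : nat -> C) (j : nat) : C :=
  let a := coef_a n f psi phi in let b := coef_b n f psi phi in
  let c := coef_c n f psi phi in let d := coef_d n f psi phi in
  (d * psi j - c * phi j + 2 * Ci * b * sh 1 psi j + 2 * Ci * a * sh 1 phi j)%C.
Definition rhs_t_psi (n : nat) (f psi phi : nat -> C) (l : nat) : C :=
  let a := coef_a n f psi phi in let b := coef_b n f psi phi in
  let c := coef_c n f psi phi in
  (- (2 * c * f l) + 4 * Ci * a * sh 1 f l + 2 * Ci * a * b * psi l
   - 4 * Ci * sh 2 psi l)%C.
Definition rhs_t_phi (n : nat) (f psi phi : nat -> C) (l : nat) : C :=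
  let a := coef_a n f psi phi in let b := coef_b n f psi phi in
  let d := coef_d n f psi phi in
  (2 * d * f l + 4 * Ci * b * sh 1 f l - 2 * Ci * a * b * phi l
   + 4 * Ci * sh 2 phi l)%C.

Definition rhs_x_f (n : nat) (f psi phi : nat -> C) (j : nat) : C :=
  let a := coef_a n f psi phi in let b := coef_b n f psi phi in
  (Ci * b * psi j + Ci * a * phi j)%C.
Definition rhs_x_psi (n : nat) (f psi phi : nat -> C) (l : nat) : C :=
  let a := coef_a n f psi phi in
  (2 * Ci * a * f l - 2 * Ci * sh 1 psi l)%C.
Definition rhs_x_phi (n : nat) (f psi phi : nat -> C) (l : nat) : C :=
  let b := coef_b n f psi phi in
  (2 * Ci * b * f l + 2 * Ci * sh 1 phi l)%C.

Definition global_solution (n : nat)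
  (Rf Rpsi Rphi : nat -> (nat -> C) -> (nat -> C) -> (nat -> C) -> nat -> C)
  (f0 psi0 phi0 : nat -> C) (f psi phi : nat -> R -> C) : Prop :=
  (forall j, (j <= S n)%nat -> f j 0 = f0 j) /\
  (forall l, (l <= n)%nat -> psi l 0 = psi0 l /\ phi l 0 = phi0 l) /\
  (forall j s, (S n < j)%nat -> f j s = 0%C) /\
  (forall l s, (n < l)%nat -> psi l s = 0%C /\ phi l s = 0%C) /\
  (forall s, f (S n) s <> 0%C) /\
  (forall j s, (j <= S n)%nat ->
     is_derive (f j) s (Rf n (fun k => f k s) (fun k => psi k s) (fun k => phi k s) j)) /\
  (forall l s, (l <= n)%nat ->
     is_derive (psi l) s (Rpsi n (fun k => f k s) (fun k => psi k s) (fun k => phi k s) l) /\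
     is_derive (phi l) s (Rphi n (fun k => f k s) (fun k => psi k s) (fun k => phi k s) l)).

Definition symmetric_solution (n : nat) (f psi phi : nat -> R -> C) : Prop :=
  (forall j s, (j <= S n)%nat -> f j s = Cconj (f j s)) /\
  (forall l s, (l <= n)%nat -> phi l s = (- Cconj (psi l s))%C).

(* Main.v *)
Require Import Defs.
From Stdlib Require Import Lia Lra FunctionalExtensionality.

Fixpoint sumD (D:nat) (g:nat -> R) : R :=
  match D with O => 0 | S k => sumD k g + g k end.

Lemma sumD_ext D g h : (forall j, (j < D)%nat -> g j = h j) -> sumD D g = sumD D h.
Proof. induction D; simpl; intros H; auto. rewrite IHD by (intros; apply H; lia). rewrite H by lia. auto. Qed.

Lemma sumD_le D g h : (forall j, (j < D)%nat -> g j <= h j) -> sumD D g <= sumD D h.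
Proof. induction D; simpl; intros H; [lra|]. assert (H1:=H D ltac:(lia)). assert (sumD D g <= sumD D h) by (apply IHD; intros; apply H; lia). lra. Qed.

Lemma sumD_const D c : sumD D (fun _ => c) = INR D * c.
Proof. induction D; simpl sumD. simpl; ring. rewrite IHD, S_INR. ring. Qed.

Lemma sumD_nonneg D g : (forall j, (j<D)%nat -> 0 <= g j) -> 0 <= sumD D g.
Proof. intros H. replace 0 with (sumD D (fun _ => 0)). apply sumD_le; auto.
 rewrite sumD_const; ring. Qed.

Lemma lip_cont (g : R -> R) K : 0 <= K -> (forall x y, Rabs (g x - g y) <= K * Rabs (x - y)) ->
  forall x, continuous g x.
Proof.
  intros HK H x. apply continuity_pt_filterlim.
  intros eps Heps. exists (eps / (K+1)). split. apply Rdiv_lt_0_compat; lra.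
  intros y [_ Hy]. unfold R_dist in *. simpl in *. unfold R_dist in *.
  eapply Rle_lt_trans. apply H.
  apply Rle_lt_trans with ((K+1) * Rabs (y - x)). assert (0 <= Rabs (y-x)) by apply Rabs_pos. nra.
  apply Rmult_lt_compat_l with (r:=K+1) in Hy; [|lra]. 
  replace ((K+1) * (eps / (K+1))) with eps in Hy by (field; lra). lra.
Qed.

Lemma cont_exRInt (g : R -> R) a b : (forall x, continuous g x) -> ex_RInt g a b.
Proof. intros H. apply (ex_RInt_continuous (V:=R_CompleteNormedModule)). intros; apply H. Qed.

Lemma RInt_bound_const (g : R -> R) M a b : (forall x, continuous g x) ->
  (forall x, Rabs (g x) <= M) -> Rabs (RInt g a b) <= M * Rabs (b - a).
Proof.
  intros Hc HM. destruct (Rle_or_lt a b) as [Hab|Hab].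
  - rewrite (Rabs_right (b-a)) by lra. rewrite Rmult_comm. apply abs_RInt_le_const; auto.
    apply cont_exRInt; auto.
  - rewrite <- opp_RInt_swap by (apply cont_exRInt; auto).
    change (opp (RInt g b a)) with (- RInt g b a). rewrite Rabs_Ropp.
    rewrite (Rabs_left (b-a)) by lra. replace (- (b - a)) with (a - b) by ring.
    rewrite Rmult_comm. apply abs_RInt_le_const; try lra; auto. apply cont_exRInt; auto.
Qed.
Lemma cont_of_ex_derive (f:R->R) x : ex_derive f x -> @continuous R_UniformSpace R_UniformSpace f x.
Proof. intros H. apply ex_derive_continuous in H. exact H. Qed.

Lemma int_Kexp_pos K c t : 0 < c -> 0 <= t ->
  RInt (fun s => K * exp (c * s)) 0 t = K * (exp (c*t) - 1) / c.
Proof.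
  intros Hc Ht. apply is_RInt_unique.
  replace (K * (exp (c * t) - 1) / c) with (minus (K * exp (c*t) / c) (K * exp (c*0) / c)).
  2:{ unfold minus, plus, opp; simpl. rewrite Rmult_0_r, exp_0. field. lra. }
  apply (is_RInt_derive (V:=R_CompleteNormedModule) (fun s => K * exp (c*s) / c)).
  - intros x _. auto_derive; auto. field. lra.
  - intros x _. apply cont_of_ex_derive. auto_derive; auto.
Qed.

Lemma int_Kexp_neg K c t : 0 < c -> t <= 0 ->
  RInt (fun s => K * exp (- c * s)) t 0 = K * (exp (- c*t) - 1) / c.
Proof.
  intros Hc Ht. apply is_RInt_unique.
  replace (K * (exp (- c * t) - 1) / c) with (minus (- K * exp (- c*0) / c) (- K * exp (- c*t) / c)).
  2:{ unfold minus, plus, opp; simpl. rewrite Rmult_0_r, exp_0. field. lra. }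
  apply (is_RInt_derive (V:=R_CompleteNormedModule) (fun s => - K * exp (- c*s) / c)).
  - intros x _. auto_derive; auto. field. lra.
  - intros x _. apply cont_of_ex_derive. auto_derive; auto.
Qed.

Lemma RInt_exp_bound (g: R->R) K c t : 0 < c -> 0 <= K -> (forall x, continuous g x) ->
  (forall s, Rabs (g s) <= K * exp (c * Rabs s)) ->
  Rabs (RInt g 0 t) <= K * exp (c * Rabs t) / c.
Proof.
  intros Hc HK Hg Hb.
  assert (Hag : forall x, continuous (fun s => Rabs (g s)) x) by (intros; apply continuous_Rabs_comp; auto).
  assert (He : forall a, 0 <= K * exp a) by (intros; apply Rmult_le_pos; auto; apply Rlt_le, exp_pos).
  destruct (Rle_or_lt 0 t) as [Ht|Ht].
  - eapply Rle_trans. apply abs_RInt_le; auto. apply cont_exRInt; auto.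
    eapply Rle_trans. apply RInt_le with (g := fun s => K * exp (c * s)); auto.
    apply cont_exRInt; auto. apply cont_exRInt; intros; apply cont_of_ex_derive; auto_derive; auto.
    intros x Hx. rewrite <- (Rabs_right x) at 2 by lra. auto.
    rewrite int_Kexp_pos by auto. rewrite Rabs_right by lra.
    unfold Rdiv. apply Rmult_le_compat_r. apply Rlt_le, Rinv_0_lt_compat; auto. lra.
  - rewrite <- opp_RInt_swap by (apply cont_exRInt; auto).
    change (opp (RInt g t 0)) with (- RInt g t 0). rewrite Rabs_Ropp.
    eapply Rle_trans. apply abs_RInt_le; try lra. apply cont_exRInt; auto.
    eapply Rle_trans. apply RInt_le with (g := fun s => K * exp (- c * s)); try lra.
    apply cont_exRInt; auto. apply cont_exRInt; intros; apply cont_of_ex_derive; auto_derive; auto.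
    intros x Hx. replace (- c * x) with (c * Rabs x). auto. rewrite Rabs_left by lra. ring.
    rewrite int_Kexp_neg by (auto; lra). rewrite (Rabs_left t) by lra.
    replace (c * - t) with (- c * t) by ring.
    unfold Rdiv. apply Rmult_le_compat_r. apply Rlt_le, Rinv_0_lt_compat; auto. lra.
Qed.

Lemma half_pow_pos k : 0 < (/2)^k.
Proof. apply pow_lt; lra. Qed.

Lemma geom_small a b C : 0 <= C -> (forall k, a <= b + C * (/2)^k) -> a <= b.
Proof.
  intros HC H. destruct (Rle_or_lt a b) as [|Hab]; auto.
  destruct (pow_lt_1_zero (/2) ltac:(rewrite Rabs_right; lra) ((a - b)/(C+1)) ltac:(apply Rdiv_lt_0_compat; lra)) as [N HN].
  specialize (HN N (le_n _)). specialize (H N). rewrite Rabs_right in HN by (apply Rle_ge, Rlt_le, half_pow_pos).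
  apply Rmult_lt_compat_l with (r:=C+1) in HN; [|lra].
  replace ((C + 1) * ((a - b) / (C + 1))) with (a - b) in HN by (field; lra).
  assert (0 < (/2)^N) by apply half_pow_pos. nra.
Qed.

Lemma cauchy_geom (x : nat -> R) C : (forall k, Rabs (x (S k) - x k) <= C * (/2)^k) ->
  is_lim_seq x (real (Lim_seq x)) /\ forall k, Rabs (x k - real (Lim_seq x)) <= 2 * C * (/2)^k.
Proof.
  intros H.
  assert (HC : 0 <= C). { specialize (H O). simpl in H. assert (0 <= Rabs (x 1%nat - x 0%nat)) by apply Rabs_pos. lra. }
  assert (Hp : forall k p, Rabs (x (k+p)%nat - x k) <= 2*C*(/2)^k - 2*C*(/2)^(k+p)).
  { intros k p. induction p.
    - rewrite Nat.add_0_r. unfold Rminus. rewrite Rplus_opp_r, Rabs_R0. lra.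
    - rewrite Nat.add_succ_r. specialize (H (k+p)%nat).
      replace (x (S (k+p)) - x k) with ((x (S (k+p)) - x (k+p)%nat) + (x (k+p)%nat - x k)) by ring.
      eapply Rle_trans. apply Rabs_triang. simpl pow. lra. }
  assert (Hp' : forall k p, Rabs (x (k+p)%nat - x k) <= 2*C*(/2)^k).
  { intros k p. specialize (Hp k p). assert (0 < (/2)^(k+p)) by apply half_pow_pos. nra. }
  assert (Hc : ex_lim_seq_cauchy x).
  { intros eps. destruct (pow_lt_1_zero (/2) ltac:(rewrite Rabs_right; lra) (eps/(4*C+1)) ltac:(apply Rdiv_lt_0_compat; [apply cond_pos|lra])) as [N HN].
    exists N. intros n m Hn Hm. specialize (HN N (le_n _)).
    rewrite Rabs_right in HN by (apply Rle_ge, Rlt_le, half_pow_pos).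
    replace n with (N + (n-N))%nat by lia. replace m with (N + (m-N))%nat by lia.
    replace (x (N + (n - N))%nat - x (N + (m - N))%nat) with ((x (N + (n - N))%nat - x N) - (x (N + (m - N))%nat - x N)) by ring.
    eapply Rle_lt_trans. apply Rabs_triang. rewrite Rabs_Ropp.
    assert (H1 := Hp' N (n-N)%nat). assert (H2 := Hp' N (m-N)%nat).
    apply Rmult_lt_compat_l with (r:=4*C+1) in HN; [|lra].
    replace ((4*C + 1) * (eps / (4*C + 1))) with (pos eps) in HN by (field; lra).
    assert (0 < (/2)^N) by apply half_pow_pos. nra. }
  apply ex_lim_seq_cauchy_corr in Hc. apply Lim_seq_correct' in Hc.
  split. exact Hc.
  intros k.
  assert (Hl : is_lim_seq (fun p => Rabs (x (p + k)%nat - x k)) (Rabs (real (Lim_seq x) - x k))).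
  { apply (is_lim_seq_abs _ (Finite (real (Lim_seq x) - x k))). apply is_lim_seq_minus'. 
    apply (is_lim_seq_incr_n x k). exact Hc. apply is_lim_seq_const. }
  assert (HH := is_lim_seq_le _ _ _ _ (fun p => eq_ind _ (fun q => Rabs (x q - x k) <= 2*C*(/2)^k) (Hp' k p) _ (Nat.add_comm k p)) Hl (is_lim_seq_const (2*C*(/2)^k))).
  simpl in HH. rewrite Rabs_minus_sym. exact HH.
Qed.

Definition LipG D (G : (nat -> R) -> nat -> R) L :=
  forall i v w, (i < D)%nat -> Rabs (G v i - G w i) <= L * sumD D (fun j => Rabs (v j - w j)).
Definition BndG D (G : (nat -> R) -> nat -> R) M :=
  forall i v, (i < D)%nat -> Rabs (G v i) <= M.

Fixpoint pic (G : (nat -> R) -> nat -> R) (u0 : nat -> R) (k : nat) : nat -> R -> R :=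
  match k with
  | O => fun i _ => u0 i
  | S k => fun i t => u0 i + RInt (fun s => G (fun j => pic G u0 k j s) i) 0 t
  end.

Lemma gcont D G L M (w : nat -> R -> R) : LipG D G L -> 0 <= L -> 0 <= M ->
  (forall j t s, (j < D)%nat -> Rabs (w j t - w j s) <= M * Rabs (t - s)) ->
  forall i x, (i < D)%nat -> continuous (fun s => G (fun j => w j s) i) x.
Proof.
  intros HL HL0 HM Hw i x Hi. apply lip_cont with (K := L * (INR D * M)).
  apply Rmult_le_pos; auto. apply Rmult_le_pos; auto. apply pos_INR.
  intros y z. eapply Rle_trans. apply HL; auto.
  replace (L * (INR D * M) * Rabs (y - z)) with (L * sumD D (fun _ => M * Rabs (y - z))) by (rewrite sumD_const; ring).
  apply Rmult_le_compat_l; auto. apply sumD_le. intros; auto.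
Qed.

Lemma RInt_diff (g : R -> R) t s : (forall x, continuous g x) -> RInt g 0 t - RInt g 0 s = RInt g s t.
Proof.
  intros Hg. rewrite <- (RInt_Chasles g s 0 t) by (apply cont_exRInt; auto).
  rewrite <- (opp_RInt_swap g 0 s) by (apply cont_exRInt; auto).
  change (plus (opp (RInt g 0 s)) (RInt g 0 t)) with (- RInt g 0 s + RInt g 0 t). ring.
Qed.

Lemma pic_lip D G L M u0 : LipG D G L -> BndG D G M -> 0 <= L -> 0 <= M ->
  forall k i t s, (i < D)%nat -> Rabs (pic G u0 k i t - pic G u0 k i s) <= M * Rabs (t - s).
Proof.
  intros HL HB HL0 HM. induction k; intros i t s Hi; simpl.
  - unfold Rminus. rewrite Rplus_opp_r, Rabs_R0. apply Rmult_le_pos; auto. apply Rabs_pos.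
  - replace (u0 i + RInt (fun s0 => G (fun j => pic G u0 k j s0) i) 0 t -
      (u0 i + RInt (fun s0 => G (fun j => pic G u0 k j s0) i) 0 s))
    with (RInt (fun s0 => G (fun j => pic G u0 k j s0) i) 0 t - RInt (fun s0 => G (fun j => pic G u0 k j s0) i) 0 s) by ring.
    rewrite RInt_diff. apply RInt_bound_const.
    intros; eapply gcont; eauto. intros; apply HB; auto.
    intros; eapply gcont; eauto.
Qed.

Lemma pic_diff D G L M u0 : LipG D G L -> BndG D G M -> 0 < L -> 0 <= M ->
  forall k i t, (i < D)%nat ->
  Rabs (pic G u0 (S k) i t - pic G u0 k i t) <=
    (M / (2*L*(INR D+1))) * (/2)^k * exp (2*L*(INR D+1) * Rabs t).
Proof.
  intros HL HB HL0 HM.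
  set (c := 2*L*(INR D+1)). assert (Hc : 0 < c) by (unfold c; assert (0 <= INR D) by apply pos_INR; nra).
  set (A := M / c). assert (HA : 0 <= A) by (unfold A; apply Rmult_le_pos; auto; apply Rlt_le, Rinv_0_lt_compat; auto).
  assert (Hlip := pic_lip D G L M u0 HL HB (Rlt_le _ _ HL0) HM).
  induction k; intros i t Hi.
  - simpl pic. unfold Rminus. rewrite Rplus_comm, <- Rplus_assoc, Rplus_opp_l, Rplus_0_l.
    eapply Rle_trans. apply RInt_bound_const. intros; apply continuous_const. intros; apply HB; auto.
    rewrite Rminus_0_r. simpl pow. rewrite Rmult_1_r.
    assert (H1 := exp_ineq1_le (c * Rabs t)). assert (0 <= Rabs t) by apply Rabs_pos.
    replace M with (A * c) by (unfold A; field; lra). nra.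
  - change (pic G u0 (S (S k)) i t) with (u0 i + RInt (fun s => G (fun j => pic G u0 (S k) j s) i) 0 t).
    change (pic G u0 (S k) i t) with (u0 i + RInt (fun s => G (fun j => pic G u0 k j s) i) 0 t).
    set (g1 := fun s => G (fun j => pic G u0 (S k) j s) i).
    set (g0 := fun s => G (fun j => pic G u0 k j s) i).
    assert (Hg1 : forall x, continuous g1 x) by (intros x; apply (gcont D G L M _ HL (Rlt_le _ _ HL0) HM); [intros; apply Hlip; auto | auto]).
    assert (Hg0 : forall x, continuous g0 x) by (intros x; apply (gcont D G L M _ HL (Rlt_le _ _ HL0) HM); [intros; apply Hlip; auto | auto]).
    replace (u0 i + RInt g1 0 t - (u0 i + RInt g0 0 t)) with (RInt (fun s => g1 s - g0 s) 0 t).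
    2:{ rewrite (RInt_minus g1 g0) by (apply cont_exRInt; auto). unfold minus, plus, opp; simpl. generalize (RInt g1 0 t) (RInt g0 0 t). intros a b. simpl in *. change (a + - b = u0 i + a - (u0 i + b)). ring. }
    set (K := L * (INR D * (A * (/2)^k))).
    assert (HK : 0 <= K). { unfold K. apply Rmult_le_pos; [lra|]. apply Rmult_le_pos. apply pos_INR. apply Rmult_le_pos; auto. apply Rlt_le, half_pow_pos. }
    eapply Rle_trans. apply (RInt_exp_bound _ K c t Hc HK).
    intros; apply (continuous_minus g1 g0); auto.
    intros s. unfold g1, g0. eapply Rle_trans. apply HL; auto.
    replace (K * exp (c * Rabs s)) with (L * sumD D (fun _ => A * (/2)^k * exp (c * Rabs s))) by (rewrite sumD_const; unfold K; ring).
    apply Rmult_le_compat_l; [lra|]. apply sumD_le. intros j Hj. apply IHk; auto.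
    assert (H1 : L * INR D / c <= /2).
    { unfold c. assert (0 <= INR D) by apply pos_INR. apply Rmult_le_reg_r with (r := 2*L*(INR D+1)). nra.
      field_simplify; try nra. }
    assert (0 <= A * (/2)^k * exp (c * Rabs t)). { apply Rmult_le_pos. apply Rmult_le_pos; auto. apply Rlt_le, half_pow_pos. apply Rlt_le, exp_pos. }
    replace (K * exp (c * Rabs t) / c) with (A * (/2)^k * exp (c * Rabs t) * (L * INR D / c)) by (unfold K; field; lra).
    simpl pow. nra.
Qed.

Lemma pic_at0 G u0 k i : pic G u0 k i 0 = u0 i.
Proof. destruct k; simpl; auto. rewrite RInt_point. change (u0 i + 0 = u0 i). ring. Qed.

Lemma abs_le0 x : Rabs x <= 0 -> x = 0.
Proof. intros H. destruct (Req_dec x 0); auto. assert (0 < Rabs x) by (apply Rabs_pos_lt; auto). lra. Qed.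

Theorem ode_global D G L M u0 : LipG D G L -> BndG D G M -> 0 < L -> 0 <= M ->
  exists u : nat -> R -> R,
    (forall i, (i < D)%nat -> u i 0 = u0 i) /\
    (forall i t, (i < D)%nat -> is_derive (u i) t (G (fun j => u j t) i)) /\
    (forall i t s, (i < D)%nat -> Rabs (u i t - u i s) <= M * Rabs (t - s)).
Proof.
  intros HL HB HL0 HM.
  set (c := 2*L*(INR D+1)). assert (Hc : 0 < c) by (unfold c; assert (0 <= INR D) by apply pos_INR; nra).
  set (A := M / c). assert (HA : 0 <= A) by (unfold A; apply Rmult_le_pos; auto; apply Rlt_le, Rinv_0_lt_compat; auto).
  assert (Hlip := pic_lip D G L M u0 HL HB (Rlt_le _ _ HL0) HM).
  assert (Hdiff := pic_diff D G L M u0 HL HB HL0 HM). fold c in Hdiff. fold A in Hdiff.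
  set (u := fun i t => real (Lim_seq (fun k => pic G u0 k i t))).
  assert (Hconv : forall k i t, (i < D)%nat -> Rabs (pic G u0 k i t - u i t) <= 2 * (A * exp (c * Rabs t)) * (/2)^k).
  { intros k i t Hi. apply (cauchy_geom (fun k => pic G u0 k i t)).
    intros m. eapply Rle_trans; [apply Hdiff; auto| right; ring]. }
  assert (He : forall t, 0 <= A * exp (c * Rabs t)) by (intros; apply Rmult_le_pos; auto; apply Rlt_le, exp_pos).
  assert (Hul : forall i t s, (i < D)%nat -> Rabs (u i t - u i s) <= M * Rabs (t - s)).
  { intros i t s Hi. apply geom_small with (C := 2 * (A * exp (c * Rabs t)) + 2 * (A * exp (c * Rabs s))).
    assert (H1 := He t). assert (H2 := He s). lra.
    intros k. assert (H1 := Hconv k i t Hi). assert (H2 := Hconv k i s Hi). assert (H3 := Hlip k i t s Hi).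
    replace (u i t - u i s) with ((u i t - pic G u0 k i t) + (pic G u0 k i t - pic G u0 k i s) + (pic G u0 k i s - u i s)) by ring.
    eapply Rle_trans. apply Rabs_triang. eapply Rle_trans. apply Rplus_le_compat_r. apply Rabs_triang.
    rewrite Rabs_minus_sym in H1. lra. }
  exists u. split; [|split].
  - intros i Hi. symmetry. apply Rminus_diag_uniq. apply abs_le0. apply geom_small with (C := 2 * (A * exp (c * Rabs 0))). apply Rmult_le_pos; auto; lra.
    intros k. rewrite Rplus_0_l. rewrite <- (pic_at0 G u0 k i) at 1. apply Hconv; auto.
  - intros i t Hi.
    set (g := fun s => G (fun j => u j s) i).
    assert (Hg : forall x, continuous g x) by (intros x; apply (gcont D G L M _ HL (Rlt_le _ _ HL0) HM); auto).
    assert (Hint : forall t, u i t = u0 i + RInt g 0 t).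
    { intros t'. apply Rminus_diag_uniq. apply abs_le0.
      apply geom_small with (C := 2 * (A * exp (c * Rabs t')) + L * INR D * 2 * A * exp (c * Rabs t') / c).
      assert (0 <= INR D) by apply pos_INR. assert (H1 := He t'). assert (0 <= L * INR D * 2 * A * exp (c * Rabs t') / c).
      { unfold Rdiv. repeat apply Rmult_le_pos; try lra; try (apply Rlt_le, exp_pos); try (apply Rlt_le, Rinv_0_lt_compat; auto). }
      lra.
      intros k.
      set (gk := fun s => G (fun j => pic G u0 k j s) i).
      assert (Hgk : forall x, continuous gk x) by (intros x; apply (gcont D G L M _ HL (Rlt_le _ _ HL0) HM); [intros; apply Hlip; auto | auto]).
      assert (E : u i t' - (u0 i + RInt g 0 t') = (u i t' - pic G u0 (S k) i t') + RInt (fun s => gk s - g s) 0 t').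
      { change (pic G u0 (S k) i t') with (u0 i + RInt gk 0 t').
        rewrite (RInt_minus gk g) by (apply cont_exRInt; auto). unfold minus, plus, opp; simpl.
        generalize (RInt g 0 t') (RInt gk 0 t'). intros a b. simpl in *. change (u i t' - (u0 i + a) = u i t' - (u0 i + b) + (b + - a)). ring. }
      rewrite E. eapply Rle_trans. apply Rabs_triang.
      set (K := L * (INR D * (2 * A * (/2)^k))).
      assert (HK : 0 <= K). { unfold K. apply Rmult_le_pos; [lra|]. apply Rmult_le_pos. apply pos_INR. apply Rmult_le_pos; [lra|]. apply Rlt_le, half_pow_pos. }
      assert (B2 := RInt_exp_bound (fun s => gk s - g s) K c t' Hc HK).
      assert (B2' : Rabs (RInt (fun s => gk s - g s) 0 t') <= K * exp (c * Rabs t') / c).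
      { apply B2. intros; apply (continuous_minus gk g); auto.
        intros s. unfold gk, g. eapply Rle_trans. apply HL; auto.
        replace (K * exp (c * Rabs s)) with (L * sumD D (fun _ => 2 * (A * exp (c * Rabs s)) * (/2)^k)) by (rewrite sumD_const; unfold K; ring).
        apply Rmult_le_compat_l; [lra|]. apply sumD_le. intros j Hj. apply Hconv; auto. }
      assert (B1 := Hconv (S k) i t' Hi). rewrite Rabs_minus_sym in B1. simpl pow in B1.
      assert (0 < (/2)^k) by apply half_pow_pos.
      replace (K * exp (c * Rabs t') / c) with (L * INR D * 2 * A * exp (c * Rabs t') / c * (/2)^k) in B2' by (unfold K; field; lra).
      assert (H1 := He t'). nra. }
    apply (is_derive_ext (fun t => u0 i + RInt g 0 t)). intros; symmetry; apply Hint.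
    assert (H := is_derive_plus (fun _ => u0 i) (fun t => RInt g 0 t) t zero (g t) (is_derive_const _ _)
      (is_derive_RInt g (fun t => RInt g 0 t) 0 t (filter_forall _ (fun b => RInt_correct g 0 b (cont_exRInt g 0 b Hg))) (Hg t))).
    rewrite plus_zero_l in H. exact H.
  - exact Hul.
Qed.


Fixpoint hp (c : nat -> R) (d : nat) (x : R) : R :=
  match d with O => c O | S d => c O + x * hp (fun k => c (S k)) d x end.

Lemma hp_ext c e d x : (forall k, (k <= d)%nat -> c k = e k) -> hp c d x = hp e d x.
Proof.
  revert c e. induction d; intros c e H; simpl. apply H; lia.
  rewrite H by lia. f_equal. f_equal. apply IHd. intros; apply H; lia.
Qed.

Lemma hp_lin c e a b d x : hp (fun k => a * c k + b * e k) d x = a * hp c d x + b * hp e d x.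
Proof.
  revert c e. induction d; intros c e; simpl. auto.
  rewrite (IHd (fun k => c (S k)) (fun k => e (S k))). ring.
Qed.

Lemma hp_top c d x : hp c (S d) x = hp c d x + c (S d) * x ^ (S d).
Proof.
  revert c. induction d; intros c. simpl. ring.
  change (hp c (S (S d)) x) with (c O + x * hp (fun k => c (S k)) (S d) x).
  rewrite IHd. change (hp c (S d) x) with (c O + x * hp (fun k => c (S k)) d x).
  change (x ^ S (S d)) with (x * x ^ (S d)). ring.
Qed.

Definition cons0 (a0 : R) (b : nat -> R) : nat -> R := fun k => match k with O => a0 | S k => b k end.

Lemma hp_cons0 a0 b d x : hp (cons0 a0 b) (S d) x = a0 + x * hp b d x.
Proof. reflexivity. Qed.

Lemma hp_addconst a0 b d x : a0 + hp b d x = hp (cons0 (a0 + b O) (fun k => b (S k))) d x.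
Proof. destruct d; simpl. auto. rewrite Rplus_assoc. f_equal. Qed.

Lemma hp_comb d : forall a b, exists g, (forall x, hp a d x + x * hp b d x = hp g (S d) x) /\ g (S d) = b d.
Proof.
  induction d; intros a b.
  - exists (cons0 (a O) (fun _ => b O)). split; [intros x; simpl; ring | reflexivity].
  - destruct (IHd (cons0 (a 1%nat + b O) (fun k => a (S (S k)))) (fun k => b (S k))) as [g' [Hg' Hg't]].
    exists (cons0 (a O) g'). split; [|simpl; auto].
    intros x. rewrite hp_cons0, <- Hg'. simpl.
    replace (hp (cons0 (a 1%nat + b 0%nat) (fun k => a (S (S k)))) d x) with (b 0%nat + hp (fun k => a (S k)) d x).
    ring. rewrite hp_addconst. apply hp_ext. intros [|k] _; simpl; auto. ring.
Qed.

Lemma hp_shift d : forall c, exists g, (forall x, hp c d (x+1) = hp g d x) /\ g d = c d.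
Proof.
  induction d; intros c.
  - exists c. split; auto.
  - destruct (IHd (fun k => c (S k))) as [g' [Hg' Hg't]].
    destruct (hp_comb d (cons0 (c O + g' O) (fun k => g' (S k))) g') as [g [Hg Hgt]].
    exists g. split; [|rewrite Hgt; auto].
    intros x. rewrite <- Hg, <- hp_addconst. simpl. rewrite Hg'. ring.
Qed.

Lemma hp_delta d : forall c, exists e, (forall x, hp c (S d) (x+1) - hp c (S d) x = hp e d x) /\ e d = INR (S d) * c (S d).
Proof.
  induction d; intros c.
  - exists (fun _ => c 1%nat). split. intros x; simpl. ring. simpl. ring.
  - destruct (IHd (fun k => c (S k))) as [e' [He' He't]].
    destruct (hp_shift (S d) (fun k => c (S k))) as [g [Hg Hgt]].
    exists (cons0 (g O) (fun k => 1 * g (S k) + 1 * e' k)). split.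
    + intros x. rewrite hp_cons0, hp_lin.
      change (hp c (S (S d)) (x+1)) with (c O + (x+1) * hp (fun k => c (S k)) (S d) (x+1)).
      change (hp c (S (S d)) x) with (c O + x * hp (fun k => c (S k)) (S d) x).
      rewrite <- He'. rewrite Hg. change (hp g (S d) x) with (g O + x * hp (fun k => g (S k)) d x).
      ring.
    + simpl cons0. rewrite He't. rewrite Hgt. rewrite !S_INR. ring.
Qed.

Lemma hp_topbound d : exists K, 0 <= K /\ forall c B, (forall m, (m <= d)%nat -> Rabs (hp c d (INR m)) <= B) ->
  Rabs (c d) <= K * B.
Proof.
  induction d.
  - exists 1. split. lra. intros c B H. specialize (H O (le_n _)). simpl in H. lra.
  - destruct IHd as [K [HK IH]]. exists (2*K). split. lra. intros c B H.
    destruct (hp_delta d c) as [e [He Het]].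
    assert (Hb : Rabs (e d) <= K * (2 * B)).
    { apply IH. intros m Hm. rewrite <- He.
      replace (INR m + 1) with (INR (S m)) by (rewrite S_INR; auto).
      unfold Rminus. eapply Rle_trans. apply Rabs_triang. rewrite Rabs_Ropp.
      assert (H1 := H (S m) ltac:(lia)). assert (H2 := H m ltac:(lia)). lra. }
    rewrite Het, Rabs_mult in Hb. rewrite (Rabs_right (INR (S d))) in Hb by (apply Rle_ge, pos_INR).
    assert (1 <= INR (S d)) by (rewrite S_INR; assert (0 <= INR d) by apply pos_INR; lra).
    assert (0 <= Rabs (c (S d))) by apply Rabs_pos. nra.
Qed.

Lemma hp_bound d : exists K, 0 <= K /\ forall c B, (forall m, (m <= d)%nat -> Rabs (hp c d (INR m)) <= B) ->
  forall k, (k <= d)%nat -> Rabs (c k) <= K * B.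
Proof.
  induction d.
  - exists 1. split. lra. intros c B H k Hk. replace k with O by lia. specialize (H O (le_n _)). simpl in H. lra.
  - destruct IHd as [K2 [HK2 IH]]. destruct (hp_topbound (S d)) as [K1 [HK1 TB]].
    set (N := (INR d + 1) ^ (S d)).
    assert (HN : 0 <= N) by (unfold N; apply pow_le; assert (0 <= INR d) by apply pos_INR; lra).
    exists (K1 + K2 * (1 + K1 * N)). split. assert (0 <= K2 * (1 + K1 * N)) by (apply Rmult_le_pos; nra). lra.
    intros c B H k Hk.
    assert (HB : 0 <= B) by (assert (H0 := H O ltac:(lia)); assert (0 <= Rabs (hp c (S d) (INR 0))) by apply Rabs_pos; lra).
    assert (Ht := TB c B H).
    assert (Hlow : forall k, (k <= d)%nat -> Rabs (c k) <= K2 * ((1 + K1 * N) * B)).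
    { apply IH. intros m Hm. 
      replace (hp c d (INR m)) with (hp c (S d) (INR m) - c (S d) * INR m ^ (S d)) by (rewrite hp_top; ring).
      unfold Rminus. eapply Rle_trans. apply Rabs_triang. rewrite Rabs_Ropp, Rabs_mult.
      assert (H1 := H m ltac:(lia)).
      assert (Hm' : Rabs (INR m ^ S d) <= N).
      { rewrite Rabs_right by (apply Rle_ge, pow_le, pos_INR). unfold N. apply pow_incr. split. apply pos_INR.
        assert (INR m <= INR d) by (apply le_INR; lia). lra. }
      assert (0 <= Rabs (c (S d))) by apply Rabs_pos.
      assert (Rabs (c (S d)) * Rabs (INR m ^ S d) <= K1 * B * N).
      { apply Rle_trans with (Rabs (c (S d)) * N). apply Rmult_le_compat_l; auto. apply Rmult_le_compat_r; auto. }
      nra. }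
    destruct (Nat.eq_dec k (S d)) as [->|Hne].
    + assert (0 <= K2 * (1 + K1 * N) * B) by (repeat apply Rmult_le_pos; nra). nra.
    + assert (H1 := Hlow k ltac:(lia)). assert (0 <= K1 * B) by nra. nra.
Qed.


Definition inbox D Rb (v : nat -> R) := forall j, (j < D)%nat -> Rabs (v j) <= Rb.
Definition good D Rb (g : (nat -> R) -> R) := exists L M, 0 <= L /\
  (forall v w, inbox D Rb v -> inbox D Rb w -> Rabs (g v - g w) <= L * sumD D (fun j => Rabs (v j - w j))) /\
  (forall v, inbox D Rb v -> Rabs (g v) <= M).

Lemma sumD_single D g j : (j < D)%nat -> (forall k, (k < D)%nat -> 0 <= g k) -> g j <= sumD D g.
Proof.
  induction D; intros Hj H. lia. simpl. destruct (Nat.eq_dec j D) as [->|].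
  assert (0 <= sumD D g) by (apply sumD_nonneg; intros; apply H; lia). lra.
  assert (g j <= sumD D g) by (apply IHD; [lia| intros; apply H; lia]). assert (0 <= g D) by (apply H; lia). lra.
Qed.

Lemma good_ext D Rb g h : (forall v, g v = h v) -> good D Rb g -> good D Rb h.
Proof. intros E [L [M [HL [H1 H2]]]]. exists L, M. split; auto. split; intros; rewrite <- ?E; auto. Qed.

Lemma good_const D Rb c : good D Rb (fun _ => c).
Proof. exists 0, (Rabs c). split. lra. split; intros. unfold Rminus; rewrite Rplus_opp_r, Rabs_R0. rewrite Rmult_0_l; lra. lra. Qed.

Lemma good_proj D Rb j : (j < D)%nat -> good D Rb (fun v => v j).
Proof.
  intros Hj. exists 1, Rb. split. lra. split. intros v w Hv Hw. rewrite Rmult_1_l.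
  apply (sumD_single D (fun j => Rabs (v j - w j))); auto. intros; apply Rabs_pos. intros v Hv. apply Hv; auto.
Qed.

Lemma good_plus D Rb g h : good D Rb g -> good D Rb h -> good D Rb (fun v => g v + h v).
Proof.
  intros [L1 [M1 [HL1 [A1 B1]]]] [L2 [M2 [HL2 [A2 B2]]]]. exists (L1+L2), (M1+M2). split. lra. split.
  - intros v w Hv Hw. replace (g v + h v - (g w + h w)) with ((g v - g w) + (h v - h w)) by ring.
    eapply Rle_trans. apply Rabs_triang. specialize (A1 v w Hv Hw). specialize (A2 v w Hv Hw). lra.
  - intros v Hv. eapply Rle_trans. apply Rabs_triang. specialize (B1 v Hv). specialize (B2 v Hv). lra.
Qed.

Lemma good_opp D Rb g : good D Rb g -> good D Rb (fun v => - g v).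
Proof.
  intros [L1 [M1 [HL1 [A1 B1]]]]. exists L1, M1. split; auto. split.
  intros v w Hv Hw. replace (- g v - - g w) with (- (g v - g w)) by ring. rewrite Rabs_Ropp. auto.
  intros v Hv. rewrite Rabs_Ropp. auto.
Qed.

Lemma good_mult D Rb g h : good D Rb g -> good D Rb h -> good D Rb (fun v => g v * h v).
Proof.
  intros [L1 [M1 [HL1 [A1 B1]]]] [L2 [M2 [HL2 [A2 B2]]]].
  exists (Rabs M1 * L2 + Rabs M2 * L1), (Rabs M1 * Rabs M2). split.
  assert (0 <= Rabs M1) by apply Rabs_pos. assert (0 <= Rabs M2) by apply Rabs_pos. nra. split.
  - intros v w Hv Hw. replace (g v * h v - g w * h w) with (g v * (h v - h w) + h w * (g v - g w)) by ring.
    eapply Rle_trans. apply Rabs_triang. rewrite !Rabs_mult.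
    specialize (A1 v w Hv Hw). specialize (A2 v w Hv Hw). assert (E1 := B1 v Hv). assert (E2 := B2 w Hw).
    assert (0 <= sumD D (fun j => Rabs (v j - w j))) by (apply sumD_nonneg; intros; apply Rabs_pos).
    assert (Rabs (g v) <= Rabs M1) by (eapply Rle_trans; [apply E1| apply Rle_abs]).
    assert (Rabs (h w) <= Rabs M2) by (eapply Rle_trans; [apply E2| apply Rle_abs]).
    assert (0 <= Rabs (g v)) by apply Rabs_pos. assert (0 <= Rabs (h w)) by apply Rabs_pos.
    assert (0 <= Rabs (h v - h w)) by apply Rabs_pos. assert (0 <= Rabs (g v - g w)) by apply Rabs_pos.
    assert (Rabs (g v) * Rabs (h v - h w) <= Rabs M1 * (L2 * sumD D (fun j => Rabs (v j - w j)))).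
    { apply Rmult_le_compat; auto. }
    assert (Rabs (h w) * Rabs (g v - g w) <= Rabs M2 * (L1 * sumD D (fun j => Rabs (v j - w j)))).
    { apply Rmult_le_compat; auto. }
    nra.
  - intros v Hv. rewrite Rabs_mult. assert (E1 := B1 v Hv). assert (E2 := B2 v Hv).
    apply Rmult_le_compat; try apply Rabs_pos. eapply Rle_trans; [apply E1| apply Rle_abs]. eapply Rle_trans; [apply E2| apply Rle_abs].
Qed.

Definition goodC D Rb (g : (nat -> R) -> C) := good D Rb (fun v => fst (g v)) /\ good D Rb (fun v => snd (g v)).

Lemma goodC_ext D Rb g h : (forall v, g v = h v) -> goodC D Rb g -> goodC D Rb h.
Proof. intros E [A B]. split. apply (good_ext _ _ _ _ (fun v => f_equal fst (E v)) A). apply (good_ext _ _ _ _ (fun v => f_equal snd (E v)) B). Qed.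
Lemma goodC_const D Rb c : goodC D Rb (fun _ => c).
Proof. split; apply good_const. Qed.
Lemma goodC_plus D Rb g h : goodC D Rb g -> goodC D Rb h -> goodC D Rb (fun v => (g v + h v)%C).
Proof. intros [A B] [E F]. split; simpl; apply good_plus; auto. Qed.
Lemma goodC_opp D Rb g : goodC D Rb g -> goodC D Rb (fun v => (- g v)%C).
Proof. intros [A B]. split; simpl; apply good_opp; auto. Qed.
Lemma goodC_minus D Rb g h : goodC D Rb g -> goodC D Rb h -> goodC D Rb (fun v => (g v - h v)%C).
Proof. intros. apply goodC_plus; auto. apply goodC_opp; auto. Qed.
Lemma goodC_mult D Rb g h : goodC D Rb g -> goodC D Rb h -> goodC D Rb (fun v => (g v * h v)%C).
Proof.
  intros [A B] [E F]. split; simpl.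
  apply (good_ext _ _ (fun v => fst (g v) * fst (h v) + - (snd (g v) * snd (h v)))). intros; ring.
  apply good_plus. apply good_mult; auto. apply good_opp, good_mult; auto.
  apply good_plus; apply good_mult; auto.
Qed.
Lemma goodC_pair D Rb g h : good D Rb g -> good D Rb h -> goodC D Rb (fun v => (g v, h v)).
Proof. intros; split; simpl; auto. Qed.
Lemma goodC_divc D Rb g h w : goodC D Rb g -> (forall v, h v = w) -> goodC D Rb (fun v => (g v / h v)%C).
Proof.
  intros Hg Hh. apply (goodC_ext _ _ (fun v => (g v * / w)%C)). intros; unfold Cdiv; rewrite Hh; auto.
  apply goodC_mult; auto. apply goodC_const.
Qed.
Lemma goodC_sh D Rb k l (s : (nat -> R) -> nat -> C) : (forall m, goodC D Rb (fun v => s v m)) ->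
  goodC D Rb (fun v => sh k (s v) l).
Proof. intros H. unfold sh. destruct (l <? k). apply goodC_const. apply H. Qed.


Definition DD n := (S n + S n + S n)%nat.
Definition fC n F0 (v : nat -> R) (j : nat) : C :=
  if (j <=? n)%nat then RtoC (v j) else if (j =? S n)%nat then RtoC F0 else 0%C.
Definition psiC n (v : nat -> R) (l : nat) : C :=
  if (l <=? n)%nat then (v (S n + l)%nat, v (S n + S n + l)%nat) else 0%C.
Definition phiC n (v : nat -> R) (l : nat) : C :=
  if (l <=? n)%nat then (- v (S n + l)%nat, v (S n + S n + l)%nat) else 0%C.

Definition Sys := nat -> (nat -> C) -> (nat -> C) -> (nat -> C) -> nat -> C.

Definition Gt (Rf Rpsi : Sys) n F0 (v : nat -> R) (i : nat) : R :=
  if (i <=? n)%nat then fst (Rf n (fC n F0 v) (psiC n v) (phiC n v) i)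
  else if (i <=? S n + n)%nat then fst (Rpsi n (fC n F0 v) (psiC n v) (phiC n v) (i - S n)%nat)
  else if (i <=? S n + S n + n)%nat then snd (Rpsi n (fC n F0 v) (psiC n v) (phiC n v) (i - (S n + S n))%nat)
  else 0.

Lemma goodC_fC n F0 Rb k : goodC (DD n) Rb (fun v => fC n F0 v k).
Proof.
  unfold fC. destruct (k <=? n)%nat eqn:E.
  - apply Nat.leb_le in E. apply goodC_pair. apply good_proj. unfold DD; lia. apply good_const.
  - apply goodC_const.
Qed.
Lemma goodC_psiC n Rb k : goodC (DD n) Rb (fun v => psiC n v k).
Proof.
  unfold psiC. destruct (k <=? n)%nat eqn:E.
  - apply Nat.leb_le in E. apply goodC_pair; apply good_proj; unfold DD; lia.
  - apply goodC_const.
Qed.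
Lemma goodC_phiC n Rb k : goodC (DD n) Rb (fun v => phiC n v k).
Proof.
  unfold phiC. destruct (k <=? n)%nat eqn:E.
  - apply Nat.leb_le in E. apply goodC_pair. apply good_opp, good_proj; unfold DD; lia. apply good_proj; unfold DD; lia.
  - apply goodC_const.
Qed.
Lemma fC_Sn n F0 v : fC n F0 v (S n) = RtoC F0.
Proof. unfold fC. replace (S n <=? n)%nat with false by (symmetry; apply Nat.leb_gt; lia). rewrite Nat.eqb_refl. auto. Qed.

Lemma goodC_invF n F0 Rb : goodC (DD n) Rb (fun v => (/ fC n F0 v (S n))%C).
Proof. apply (goodC_ext _ _ (fun _ => (/ RtoC F0)%C)). intros; rewrite fC_Sn; auto. apply goodC_const. Qed.

Lemma goodC_invF2 n F0 Rb : goodC (DD n) Rb (fun v => (/ (fC n F0 v (S n) * fC n F0 v (S n)))%C).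
Proof. apply (goodC_ext _ _ (fun _ => (/ (RtoC F0 * RtoC F0))%C)). intros; rewrite fC_Sn; auto. apply goodC_const. Qed.

Ltac gC := repeat first [ apply goodC_plus | apply goodC_minus | apply goodC_opp | apply goodC_mult
  | apply goodC_invF | apply goodC_invF2 | apply goodC_fC | apply goodC_psiC | apply goodC_phiC
  | (apply goodC_divc; [| intros; apply fC_Sn])
  | (apply goodC_sh; intros) | apply goodC_const ].

Lemma good_x n F0 Rb j : goodC (DD n) Rb (fun v => rhs_x_f n (fC n F0 v) (psiC n v) (phiC n v) j)
  /\ goodC (DD n) Rb (fun v => rhs_x_psi n (fC n F0 v) (psiC n v) (phiC n v) j)
  /\ goodC (DD n) Rb (fun v => rhs_x_phi n (fC n F0 v) (psiC n v) (phiC n v) j).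
Proof. unfold rhs_x_f, rhs_x_psi, rhs_x_phi, coef_a, coef_b. cbv zeta. split; [|split]; gC. Qed.

Lemma good_t n F0 Rb j : goodC (DD n) Rb (fun v => rhs_t_f n (fC n F0 v) (psiC n v) (phiC n v) j)
  /\ goodC (DD n) Rb (fun v => rhs_t_psi n (fC n F0 v) (psiC n v) (phiC n v) j)
  /\ goodC (DD n) Rb (fun v => rhs_t_phi n (fC n F0 v) (psiC n v) (phiC n v) j).
Proof. unfold rhs_t_f, rhs_t_psi, rhs_t_phi, coef_a, coef_b, coef_c, coef_d. cbv zeta. split; [|split]; gC. Qed.


Fixpoint hpC (c : nat -> C) (d : nat) (x : R) : C :=
  match d with O => c O | S d => (c O + RtoC x * hpC (fun k => c (S k)) d x)%C end.

Lemma hpC_ext c e d x : (forall k, (k <= d)%nat -> c k = e k) -> hpC c d x = hpC e d x.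
Proof.
  revert c e. induction d; intros c e H; simpl. apply H; lia.
  rewrite H by lia. f_equal. f_equal. apply IHd. intros; apply H; lia.
Qed.
Lemma hpC_plus u w d x : hpC (fun k => (u k + w k)%C) d x = (hpC u d x + hpC w d x)%C.
Proof. revert u w; induction d; intros; simpl; auto. rewrite IHd. ring. Qed.
Lemma hpC_scal a u d x : hpC (fun k => (a * u k)%C) d x = (a * hpC u d x)%C.
Proof. revert u; induction d; intros; simpl; auto. rewrite IHd. ring. Qed.
Lemma hpC_opp u d x : hpC (fun k => (- u k)%C) d x = (- hpC u d x)%C.
Proof. revert u; induction d; intros; simpl; auto. rewrite IHd. ring. Qed.
Lemma hpC_top c d x : hpC c (S d) x = (hpC c d x + c (S d) * RtoC (x ^ S d))%C.
Proof.
  revert c. induction d; intros c. simpl. rewrite Rmult_1_r. ring.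
  change (hpC c (S (S d)) x) with (c O + RtoC x * hpC (fun k => c (S k)) (S d) x)%C.
  rewrite IHd. change (hpC c (S d) x) with (c O + RtoC x * hpC (fun k => c (S k)) d x)%C.
  change (x ^ S (S d)) with (x * x ^ (S d)). rewrite RtoC_mult. ring.
Qed.

Lemma hpC_sh1 s d x : hpC (fun l => sh 1 s l) d x = (RtoC x * hpC s d x - s d * RtoC (x ^ S d))%C.
Proof.
  destruct d.
  - simpl. unfold sh. simpl. rewrite Rmult_1_r. ring.
  - change (hpC (fun l => sh 1 s l) (S d) x) with (sh 1 s O + RtoC x * hpC (fun k => sh 1 s (S k)) d x)%C.
    rewrite (hpC_ext _ s). rewrite hpC_top. unfold sh. simpl. 
    change (x * x ^ d) with (x ^ S d). rewrite RtoC_mult. ring.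
    intros k _. unfold sh. simpl. rewrite Nat.sub_0_r. auto.
Qed.

Lemma hpC_sh2 s d x : hpC (fun l => sh 2 s l) d x =
  (RtoC (x*x) * hpC s d x - s d * RtoC (x ^ S (S d)) - sh 1 s d * RtoC (x ^ S d))%C.
Proof.
  destruct d as [|[|m]].
  - simpl. unfold sh. simpl. rewrite !Rmult_1_r, RtoC_mult. ring.
  - simpl. unfold sh. simpl. rewrite !Rmult_1_r, !RtoC_mult. ring.
  - change (hpC (fun l => sh 2 s l) (S (S m)) x) with (sh 2 s O + RtoC x * (sh 2 s 1 + RtoC x * hpC (fun k => sh 2 s (S (S k))) m x))%C.
    rewrite (hpC_ext _ s). rewrite !hpC_top. unfold sh. simpl.
    rewrite ?Nat.sub_0_r. rewrite !RtoC_mult. ring.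
    intros k _. unfold sh. simpl. rewrite Nat.sub_0_r. auto.
Qed.

Lemma hpC_minus u w d x : hpC (fun k => (u k - w k)%C) d x = (hpC u d x - hpC w d x)%C.
Proof. revert u w; induction d; intros; simpl; auto. rewrite IHd. ring. Qed.

Lemma hpC_low c d x : hpC c d x = (hpC c (S d) x - c (S d) * RtoC (x ^ S d))%C.
Proof. rewrite hpC_top. ring. Qed.

Lemma lax_x n (f psi phi : nat -> C) x : f (S n) <> 0%C -> psi (S n) = 0%C -> phi (S n) = 0%C ->
  (2 * hpC f (S n) x * hpC (fun j => rhs_x_f n f psi phi j) (S n) x =
   hpC (fun l => rhs_x_psi n f psi phi l) n x * hpC phi n x
   + hpC psi n x * hpC (fun l => rhs_x_phi n f psi phi l) n x)%C.
Proof.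
  intros HF Hpsi Hphi.
  rewrite (hpC_ext (fun j => rhs_x_f n f psi phi j) (fun j => (Ci * coef_b n f psi phi * psi j + Ci * coef_a n f psi phi * phi j)%C)) by (intros; reflexivity).
  rewrite (hpC_ext (fun j => rhs_x_psi n f psi phi j) (fun j => (2 * Ci * coef_a n f psi phi * f j - 2 * Ci * sh 1 psi j)%C)) by (intros; reflexivity).
  rewrite (hpC_ext (fun j => rhs_x_phi n f psi phi j) (fun j => (2 * Ci * coef_b n f psi phi * f j + 2 * Ci * sh 1 phi j)%C)) by (intros; reflexivity).
  rewrite !hpC_plus, hpC_minus, !hpC_scal.
  rewrite !hpC_sh1. rewrite (hpC_top psi), (hpC_top phi), Hpsi, Hphi. rewrite (hpC_low f n).
  unfold coef_a, coef_b. field. auto.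
Qed.

Lemma lax_t n (f psi phi : nat -> C) x : f (S n) <> 0%C -> psi (S n) = 0%C -> phi (S n) = 0%C ->
  (2 * hpC f (S n) x * hpC (fun j => rhs_t_f n f psi phi j) (S n) x =
   hpC (fun l => rhs_t_psi n f psi phi l) n x * hpC phi n x
   + hpC psi n x * hpC (fun l => rhs_t_phi n f psi phi l) n x)%C.
Proof.
  intros HF Hpsi Hphi.
  rewrite (hpC_ext (fun j => rhs_t_f n f psi phi j) (fun j => (coef_d n f psi phi * psi j - coef_c n f psi phi * phi j + 2 * Ci * coef_b n f psi phi * sh 1 psi j + 2 * Ci * coef_a n f psi phi * sh 1 phi j)%C)) by (intros; reflexivity).
  rewrite (hpC_ext (fun j => rhs_t_psi n f psi phi j) (fun l => (- (2 * coef_c n f psi phi * f l) + 4 * Ci * coef_a n f psi phi * sh 1 f l + 2 * Ci * coef_a n f psi phi * coef_b n f psi phi * psi l - 4 * Ci * sh 2 psi l)%C)) by (intros; reflexivity).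
  rewrite (hpC_ext (fun j => rhs_t_phi n f psi phi j) (fun l => (2 * coef_d n f psi phi * f l + 4 * Ci * coef_b n f psi phi * sh 1 f l - 2 * Ci * coef_a n f psi phi * coef_b n f psi phi * phi l + 4 * Ci * sh 2 phi l)%C)) by (intros; reflexivity).
  repeat rewrite ?hpC_plus, ?hpC_minus, ?hpC_opp, ?hpC_scal.
  rewrite !hpC_sh1, !hpC_sh2. rewrite (hpC_top psi), (hpC_top phi), Hpsi, Hphi. rewrite (hpC_low f n).
  change (x ^ S (S n)) with (x * x ^ S n). rewrite !RtoC_mult.
  unfold coef_a, coef_b, coef_c, coef_d. field. auto.
Qed.


Lemma conj_Ci : Cconj Ci = (- Ci)%C.
Proof. unfold Cconj, Ci, Copp. simpl. f_equal. ring. Qed.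
Lemma conj_R (r : R) : Cconj (RtoC r) = RtoC r.
Proof. unfold Cconj, RtoC. simpl. f_equal. ring. Qed.
Lemma conj0 : Cconj 0%C = 0%C.
Proof. apply (conj_R 0). Qed.
Lemma sh_conj_neg k (s r : nat -> C) l : (forall m, Cconj (s m) = (- r m)%C) -> Cconj (sh k s l) = (- sh k r l)%C.
Proof. intros H. unfold sh. destruct (l <? k)%nat. rewrite conj0, Copp_0; auto. auto. Qed.
Lemma sh_conj k (s : nat -> C) l : (forall m, Cconj (s m) = s m) -> Cconj (sh k s l) = sh k s l.
Proof. intros H. unfold sh. destruct (l <? k)%nat. apply conj0. auto. Qed.

Ltac conj_push HF :=
  repeat first [ rewrite Cplus_conj | rewrite Cminus_conj | rewrite Cmult_conj | rewrite Copp_conj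
               | rewrite Cdiv_conj by (auto; apply Cmult_neq_0; auto) ];
  rewrite ?conj_Ci, ?conj_R.


Lemma symx_f n (f psi phi : nat -> C) j : f (S n) <> 0%C ->
  (forall k, Cconj (f k) = f k) -> (forall k, Cconj (psi k) = (- phi k)%C) -> (forall k, Cconj (phi k) = (- psi k)%C) ->
  Cconj (rhs_x_f n f psi phi j) = rhs_x_f n f psi phi j.
Proof.
  intros HF Hf Hps Hph. unfold rhs_x_f, coef_a, coef_b. cbv zeta. conj_push HF.
  rewrite ?Hf, ?Hps, ?Hph. field. auto.
Qed.

Ltac conj_sub Hf Hps Hph f psi phi :=
  repeat first [ rewrite (sh_conj_neg _ psi phi _ Hps) | rewrite (sh_conj_neg _ phi psi _ Hph) | rewrite (sh_conj _ f _ Hf) ];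
  rewrite ?Hf, ?Hps, ?Hph.

Lemma symx_phi n (f psi phi : nat -> C) l : f (S n) <> 0%C ->
  (forall k, Cconj (f k) = f k) -> (forall k, Cconj (psi k) = (- phi k)%C) -> (forall k, Cconj (phi k) = (- psi k)%C) ->
  rhs_x_phi n f psi phi l = (- Cconj (rhs_x_psi n f psi phi l))%C.
Proof.
  intros HF Hf Hps Hph. unfold rhs_x_phi, rhs_x_psi, coef_a, coef_b. cbv zeta. conj_push HF.
  conj_sub Hf Hps Hph f psi phi. field. auto.
Qed.

Lemma symt_f n (f psi phi : nat -> C) j : f (S n) <> 0%C ->
  (forall k, Cconj (f k) = f k) -> (forall k, Cconj (psi k) = (- phi k)%C) -> (forall k, Cconj (phi k) = (- psi k)%C) ->
  Cconj (rhs_t_f n f psi phi j) = rhs_t_f n f psi phi j.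
Proof.
  intros HF Hf Hps Hph. unfold rhs_t_f, coef_a, coef_b, coef_c, coef_d. cbv zeta. conj_push HF.
  conj_sub Hf Hps Hph f psi phi. field. auto.
Qed.

Lemma symt_phi n (f psi phi : nat -> C) l : f (S n) <> 0%C ->
  (forall k, Cconj (f k) = f k) -> (forall k, Cconj (psi k) = (- phi k)%C) -> (forall k, Cconj (phi k) = (- psi k)%C) ->
  rhs_t_phi n f psi phi l = (- Cconj (rhs_t_psi n f psi phi l))%C.
Proof.
  intros HF Hf Hps Hph. unfold rhs_t_phi, rhs_t_psi, coef_a, coef_b, coef_c, coef_d. cbv zeta. conj_push HF.
  conj_sub Hf Hps Hph f psi phi. field. auto.
Qed.

Lemma topx n (f psi phi : nat -> C) : psi (S n) = 0%C -> phi (S n) = 0%C -> rhs_x_f n f psi phi (S n) = 0%C.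
Proof. intros H1 H2. unfold rhs_x_f. cbv zeta. rewrite H1, H2. ring. Qed.

Lemma topt n (f psi phi : nat -> C) : f (S n) <> 0%C -> psi (S n) = 0%C -> phi (S n) = 0%C -> rhs_t_f n f psi phi (S n) = 0%C.
Proof.
  intros HF H1 H2. unfold rhs_t_f, coef_a, coef_b, coef_c, coef_d. cbv zeta. rewrite H1, H2.
  unfold sh. simpl. rewrite Nat.sub_0_r. field. auto.
Qed.


Lemma hpC_fst c d x : fst (hpC c d x) = hp (fun k => fst (c k)) d x.
Proof. revert c; induction d; intros c; simpl; auto. rewrite IHd. ring. Qed.
Lemma hpC_snd c d x : snd (hpC c d x) = hp (fun k => snd (c k)) d x.
Proof. revert c; induction d; intros c; simpl; auto. rewrite IHd, hpC_fst. ring. Qed.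
Lemma hp_zero c d x : (forall k, (k <= d)%nat -> c k = 0) -> hp c d x = 0.
Proof. revert c; induction d; intros c H; simpl. apply H; lia. rewrite H by lia. rewrite IHd. ring. intros; apply H; lia. Qed.
Lemma hpC_negconj c d x : hpC (fun k => (- Cconj (c k))%C) d x = (- Cconj (hpC c d x))%C.
Proof.
  revert c; induction d; intros c; simpl; auto. rewrite IHd.
  rewrite Cplus_conj, Cmult_conj, conj_R. ring.
Qed.

Lemma is_derive_pair (x y : R -> R) s dx dy : is_derive x s dx -> is_derive y s dy ->
  @is_derive R_AbsRing C_R_NormedModule (fun t => (x t, y t) : C) s ((dx, dy) : C).
Proof.
  intros Hx Hy.
  assert (H := is_derive_plus (V := C_R_NormedModule) (fun t => scal (x t) ((1,0) : C)) (fun t => scal (y t) ((0,1) : C)) s _ _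
     (is_derive_scal_l (V := C_R_NormedModule) x s dx ((1,0):C) Hx) (is_derive_scal_l (V := C_R_NormedModule) y s dy ((0,1):C) Hy)).
  eapply is_derive_ext; [| replace ((dx,dy) : C) with (plus (scal dx ((1,0):C)) (scal dy ((0,1):C))); [exact H|] ].
  - intros t. simpl. unfold plus, scal; simpl. unfold prod_plus, prod_scal; simpl.
    unfold plus, scal; simpl. unfold mult; simpl. f_equal; ring.
  - simpl. unfold plus, scal; simpl. unfold prod_plus, prod_scal; simpl.
    unfold plus, scal; simpl. unfold mult; simpl. f_equal; ring.
Qed.

Lemma is_derive_hp (w : nat -> R -> R) (w' : nat -> R) d x s :
  (forall k, (k <= d)%nat -> is_derive (w k) s (w' k)) ->
  is_derive (fun t => hp (fun k => w k t) d x) s (hp w' d x).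
Proof.
  revert w w'. induction d; intros w w' H; simpl. apply H; lia.
  apply (is_derive_plus (fun t => w O t) (fun t => x * hp (fun k => w (S k) t) d x)). apply H; lia.
  apply (is_derive_scal (fun t => hp (fun k => w (S k) t) d x)). apply (IHd (fun k => w (S k)) (fun k => w' (S k))).
  intros; apply H; lia.
Qed.

Definition SysOK (Rf Rpsi Rphi : Sys) := forall n (f psi phi : nat -> C),
  f (S n) <> 0%C -> (forall k, Cconj (f k) = f k) -> (forall k, Cconj (psi k) = (- phi k)%C) ->
  (forall k, Cconj (phi k) = (- psi k)%C) -> psi (S n) = 0%C -> phi (S n) = 0%C ->
  (forall j, Cconj (Rf n f psi phi j) = Rf n f psi phi j) /\
  (forall l, Rphi n f psi phi l = (- Cconj (Rpsi n f psi phi l))%C) /\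
  Rf n f psi phi (S n) = 0%C /\
  (forall x, (2 * hpC f (S n) x * hpC (fun j => Rf n f psi phi j) (S n) x =
     hpC (fun l => Rpsi n f psi phi l) n x * hpC phi n x + hpC psi n x * hpC (fun l => Rphi n f psi phi l) n x)%C).

Lemma SysOK_x : SysOK rhs_x_f rhs_x_psi rhs_x_phi.
Proof.
  intros n f psi phi HF Hf Hps Hph H1 H2. split; [|split; [|split]].
  - intros; apply symx_f; auto.
  - intros; apply symx_phi; auto.
  - apply topx; auto.
  - intros; apply lax_x; auto.
Qed.
Lemma SysOK_t : SysOK rhs_t_f rhs_t_psi rhs_t_phi.
Proof.
  intros n f psi phi HF Hf Hps Hph H1 H2. split; [|split; [|split]].
  - intros; apply symt_f; auto.
  - intros; apply symt_phi; auto.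
  - apply topt; auto.
  - intros; apply lax_t; auto.
Qed.

Lemma C_eta (z : C) : z = (fst z, snd z).
Proof. destruct z; auto. Qed.

Lemma recon_sym n F0 v : F0 <> 0 ->
  fC n F0 v (S n) <> 0%C /\ (forall k, Cconj (fC n F0 v k) = fC n F0 v k) /\
  (forall k, Cconj (psiC n v k) = (- phiC n v k)%C) /\ (forall k, Cconj (phiC n v k) = (- psiC n v k)%C) /\
  psiC n v (S n) = 0%C /\ phiC n v (S n) = 0%C.
Proof.
  intros HF. split; [|split; [|split; [|split; [|split]]]].
  - rewrite fC_Sn. intros E. apply HF. apply (f_equal fst) in E. simpl in E. auto.
  - intros k. unfold fC. destruct (k <=? n)%nat. apply conj_R. destruct (k =? S n)%nat. apply conj_R. apply conj0.
  - intros k. unfold psiC, phiC. destruct (k <=? n)%nat. unfold Cconj, Copp; simpl. f_equal; ring. rewrite conj0, Copp_0; auto.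
  - intros k. unfold psiC, phiC. destruct (k <=? n)%nat. unfold Cconj, Copp; simpl. f_equal; ring. rewrite conj0, Copp_0; auto.
  - unfold psiC. replace (S n <=? n)%nat with false by (symmetry; apply Nat.leb_gt; lia). auto.
  - unfold phiC. replace (S n <=? n)%nat with false by (symmetry; apply Nat.leb_gt; lia). auto.
Qed.

Lemma Gt_f Rf Rpsi n F0 v k : (k <= n)%nat -> Gt Rf Rpsi n F0 v k = fst (Rf n (fC n F0 v) (psiC n v) (phiC n v) k).
Proof. intros H. unfold Gt. replace (k <=? n)%nat with true by (symmetry; apply Nat.leb_le; lia). auto. Qed.
Lemma Gt_p Rf Rpsi n F0 v l : (l <= n)%nat -> Gt Rf Rpsi n F0 v (S n + l) = fst (Rpsi n (fC n F0 v) (psiC n v) (phiC n v) l).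
Proof.
  intros H. unfold Gt. replace (S n + l <=? n)%nat with false by (symmetry; apply Nat.leb_gt; lia).
  replace (S n + l <=? S n + n)%nat with true by (symmetry; apply Nat.leb_le; lia). f_equal. f_equal. lia.
Qed.
Lemma Gt_q Rf Rpsi n F0 v l : (l <= n)%nat -> Gt Rf Rpsi n F0 v (S n + S n + l) = snd (Rpsi n (fC n F0 v) (psiC n v) (phiC n v) l).
Proof.
  intros H. unfold Gt. replace (S n + S n + l <=? n)%nat with false by (symmetry; apply Nat.leb_gt; lia).
  replace (S n + S n + l <=? S n + n)%nat with false by (symmetry; apply Nat.leb_gt; lia).
  replace (S n + S n + l <=? S n + S n + n)%nat with true by (symmetry; apply Nat.leb_le; lia). f_equal. f_equal. lia.
Qed.

Definition FD Rf Rpsi n F0 v k := if (k <=? n)%nat then Gt Rf Rpsi n F0 v k else 0.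

Lemma dE_zero Rf Rpsi Rphi n F0 v x : SysOK Rf Rpsi Rphi -> F0 <> 0 ->
  2 * hp (fun k => fst (fC n F0 v k)) (S n) x * hp (FD Rf Rpsi n F0 v) (S n) x
  + 2 * hp (fun k => fst (psiC n v k)) n x * hp (fun l => Gt Rf Rpsi n F0 v (S n + l)) n x
  + 2 * hp (fun k => snd (psiC n v k)) n x * hp (fun l => Gt Rf Rpsi n F0 v (S n + S n + l)) n x = 0.
Proof.
  intros HS HF. destruct (recon_sym n F0 v HF) as [H1 [H2 [H3 [H4 [H5 H6]]]]].
  destruct (HS n _ _ _ H1 H2 H3 H4 H5 H6) as [S1 [S2 [S3 L]]].
  specialize (L x).
  rewrite (hp_ext (FD Rf Rpsi n F0 v) (fun k => fst (Rf n (fC n F0 v) (psiC n v) (phiC n v) k))).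
  2:{ intros k Hk. unfold FD. destruct (k <=? n)%nat eqn:E. apply Nat.leb_le in E. apply Gt_f; auto.
      apply Nat.leb_gt in E. replace k with (S n) by lia. rewrite S3. auto. }
  rewrite (hp_ext (fun l => Gt Rf Rpsi n F0 v (S n + l)) (fun l => fst (Rpsi n (fC n F0 v) (psiC n v) (phiC n v) l))) by (intros; apply Gt_p; auto).
  rewrite (hp_ext (fun l => Gt Rf Rpsi n F0 v (S n + S n + l)) (fun l => snd (Rpsi n (fC n F0 v) (psiC n v) (phiC n v) l))) by (intros; apply Gt_q; auto).
  set (RF := fun j => Rf n (fC n F0 v) (psiC n v) (phiC n v) j) in *.
  set (RP := fun l => Rpsi n (fC n F0 v) (psiC n v) (phiC n v) l) in *.
  set (RH := fun l => Rphi n (fC n F0 v) (psiC n v) (phiC n v) l) in *.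
  assert (E1 : hp (fun k => fst (RF k)) (S n) x = fst (hpC RF (S n) x)) by (rewrite hpC_fst; auto).
  assert (E2 : hp (fun k => fst (RP k)) n x = fst (hpC RP n x)) by (rewrite hpC_fst; auto).
  assert (E3 : hp (fun k => snd (RP k)) n x = snd (hpC RP n x)) by (rewrite hpC_snd; auto).
  assert (E4 : hp (fun k => fst (fC n F0 v k)) (S n) x = fst (hpC (fC n F0 v) (S n) x)) by (rewrite hpC_fst; auto).
  assert (E5 : hp (fun k => fst (psiC n v k)) n x = fst (hpC (psiC n v) n x)) by (rewrite hpC_fst; auto).
  assert (E6 : hp (fun k => snd (psiC n v k)) n x = snd (hpC (psiC n v) n x)) by (rewrite hpC_snd; auto).
  rewrite E1, E2, E3, E4, E5, E6.
  assert (Ep : hpC (phiC n v) n x = (- Cconj (hpC (psiC n v) n x))%C).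
  { rewrite <- hpC_negconj. apply hpC_ext. intros k _. rewrite H3. ring. }
  assert (Ec : hpC RH n x = (- Cconj (hpC RP n x))%C).
  { rewrite <- hpC_negconj. apply hpC_ext. intros k _. apply S2. }
  assert (Ef : snd (hpC (fC n F0 v) (S n) x) = 0).
  { rewrite hpC_snd. apply hp_zero. intros k _. unfold fC. destruct (k <=? n)%nat; auto. destruct (k =? S n)%nat; auto. }
  rewrite Ep, Ec in L. apply (f_equal fst) in L.
  revert L Ef.
  generalize (hpC (fC n F0 v) (S n) x) (hpC RF (S n) x) (hpC RP n x) (hpC (psiC n v) n x).
  intros [f1 f2] [a1 a2] [b1 b2] [p1 p2]. simpl. intros L Ef. subst f2. nra.
Qed.

Lemma good_Gt Rf Rpsi n F0 Rb i :
  (forall j, goodC (DD n) Rb (fun v => Rf n (fC n F0 v) (psiC n v) (phiC n v) j)) ->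
  (forall j, goodC (DD n) Rb (fun v => Rpsi n (fC n F0 v) (psiC n v) (phiC n v) j)) ->
  good (DD n) Rb (fun v => Gt Rf Rpsi n F0 v i).
Proof.
  intros H1 H2. unfold Gt. destruct (i <=? n)%nat. apply H1.
  destruct (i <=? S n + n)%nat. apply H2. destruct (i <=? S n + S n + n)%nat. apply H2. apply good_const.
Qed.

Lemma good_unif D Rb (g : nat -> (nat -> R) -> R) : (forall i, (i < D)%nat -> good D Rb (g i)) ->
  exists L M, 0 <= L /\ 0 <= M /\ forall i, (i < D)%nat ->
    (forall v w, inbox D Rb v -> inbox D Rb w -> Rabs (g i v - g i w) <= L * sumD D (fun j => Rabs (v j - w j))) /\
    (forall v, inbox D Rb v -> Rabs (g i v) <= M).
Proof.
  intros H. cut (forall N, (N <= D)%nat -> exists L M, 0 <= L /\ 0 <= M /\ forall i, (i < N)%nat ->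
    (forall v w, inbox D Rb v -> inbox D Rb w -> Rabs (g i v - g i w) <= L * sumD D (fun j => Rabs (v j - w j))) /\
    (forall v, inbox D Rb v -> Rabs (g i v) <= M)).
  { intros C. apply C. lia. }
  induction N; intros HN.
  - exists 0, 0. split; [lra|split; [lra|]]. intros; lia.
  - destruct IHN as [L1 [M1 [HL1 [HM1 HI]]]]. lia.
    destruct (H N ltac:(lia)) as [L2 [M2 [HL2 [A2 B2]]]].
    exists (L1 + L2), (M1 + Rabs M2). split; [lra|split]. assert (0 <= Rabs M2) by apply Rabs_pos. lra.
    intros i Hi. destruct (Nat.eq_dec i N) as [->|Hne].
    + split. intros v w Hv Hw. eapply Rle_trans. apply A2; auto. apply Rmult_le_compat_r. apply sumD_nonneg; intros; apply Rabs_pos. lra.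
      intros v Hv. eapply Rle_trans. apply B2; auto. assert (M2 <= Rabs M2) by apply Rle_abs. lra.
    + destruct (HI i ltac:(lia)) as [A1 B1]. split. intros v w Hv Hw. eapply Rle_trans. apply A1; auto. apply Rmult_le_compat_r. apply sumD_nonneg; intros; apply Rabs_pos. lra.
      intros v Hv. eapply Rle_trans. apply B1; auto. assert (0 <= Rabs M2) by apply Rabs_pos. lra.
Qed.

Definition clip (Rb : R) (v : nat -> R) (j : nat) : R := Rmax (- Rb) (Rmin Rb (v j)).

Lemma clip_box D Rb v : 0 <= Rb -> inbox D Rb (clip Rb v).
Proof. intros H j _. unfold clip, Rmax, Rmin. repeat destruct Rle_dec; apply Rabs_le; lra. Qed.
Lemma clip_lip Rb v w j : 0 <= Rb -> Rabs (clip Rb v j - clip Rb w j) <= Rabs (v j - w j).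
Proof.
  intros H. unfold clip, Rmax, Rmin. repeat destruct Rle_dec; unfold Rabs; repeat destruct Rcase_abs; lra.
Qed.
Lemma clip_id D Rb v j : inbox D Rb v -> (j < D)%nat -> clip Rb v j = v j.
Proof. intros H Hj. specialize (H j Hj). apply Rabs_le_between in H. unfold clip, Rmax, Rmin. repeat destruct Rle_dec; lra. Qed.

Definition Efun n F0 v x :=
  hp (fun k => fst (fC n F0 v k)) (S n) x * hp (fun k => fst (fC n F0 v k)) (S n) x
  + hp (fun k => fst (psiC n v k)) n x * hp (fun k => fst (psiC n v k)) n x
  + hp (fun k => snd (psiC n v k)) n x * hp (fun k => snd (psiC n v k)) n x.

Lemma box_of_E n F0 : exists K, 0 <= K /\ forall v B, (forall m, (m <= S n)%nat -> Efun n F0 v (INR m) <= B) ->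
  inbox (DD n) (K * (1 + B)) v.
Proof.
  destruct (hp_bound (S n)) as [K1 [HK1 B1]]. destruct (hp_bound n) as [K2 [HK2 B2]].
  exists (K1 + K2). split. lra. intros v B H i Hi.
  assert (Hsq : forall a b c, a*a + b*b + c*c <= B -> Rabs a <= 1 + B /\ Rabs b <= 1 + B /\ Rabs c <= 1 + B).
  { intros a b c Habc. assert (forall y, Rabs y <= 1 + y*y). { intros y. unfold Rabs; destruct Rcase_abs; nra. }
    assert (H1 := H0 a). assert (H2 := H0 b). assert (H3 := H0 c). repeat split; nra. }
  assert (HB : 0 <= 1 + B). { specialize (H O ltac:(lia)). unfold Efun in H. nra. }
  destruct (Compare_dec.le_lt_dec i n) as [Hin|Hin].
  - assert (E := B1 (fun k => fst (fC n F0 v k)) (1 + B)). 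
    assert (Hvi : fst (fC n F0 v i) = v i) by (unfold fC; replace (i <=? n)%nat with true by (symmetry; apply Nat.leb_le; lia); auto).
    rewrite <- Hvi. eapply Rle_trans. apply E. intros m Hm. apply (Hsq _ _ _ (H m Hm)). lia.
    assert (0 <= K2 * (1+B)) by nra. nra.
  - destruct (Compare_dec.le_lt_dec i (S n + n)) as [Hin2|Hin2].
    + set (l := (i - S n)%nat). replace i with (S n + l)%nat by (unfold l; lia).
      assert (E := B2 (fun k => fst (psiC n v k)) (1 + B)).
      assert (Hvi : fst (psiC n v l) = v (S n + l)%nat) by (unfold psiC; replace (l <=? n)%nat with true by (symmetry; apply Nat.leb_le; unfold l; lia); auto).
      rewrite <- Hvi. eapply Rle_trans. apply E. intros m Hm. apply (Hsq _ _ _ (H m ltac:(lia))). unfold l; lia.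
      assert (0 <= K1 * (1+B)) by nra. nra.
    + set (l := (i - (S n + S n))%nat). replace i with (S n + S n + l)%nat by (unfold l; lia).
      assert (E := B2 (fun k => snd (psiC n v k)) (1 + B)).
      assert (Hvi : snd (psiC n v l) = v (S n + S n + l)%nat) by (unfold psiC; replace (l <=? n)%nat with true by (symmetry; apply Nat.leb_le; unfold l, DD in *; lia); auto).
      rewrite <- Hvi. eapply Rle_trans. apply E. intros m Hm. apply (Hsq _ _ _ (H m ltac:(lia))). unfold l, DD in *; lia.
      assert (0 <= K1 * (1+B)) by nra. nra.
Qed.

Lemma recon_ext n F0 v w : (forall j, (j < DD n)%nat -> v j = w j) ->
  fC n F0 v = fC n F0 w /\ psiC n v = psiC n w /\ phiC n v = phiC n w.
Proof.
  intros H. split; [|split]; apply functional_extensionality; intros j.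
  - unfold fC. destruct (j <=? n)%nat eqn:E; auto. apply Nat.leb_le in E. rewrite H; auto. unfold DD; lia.
  - unfold psiC. destruct (j <=? n)%nat eqn:E; auto. apply Nat.leb_le in E. rewrite !H; auto; unfold DD; lia.
  - unfold phiC. destruct (j <=? n)%nat eqn:E; auto. apply Nat.leb_le in E. rewrite !H; auto; unfold DD; lia.
Qed.

Lemma Gt_ext Rf Rpsi n F0 v w i : (forall j, (j < DD n)%nat -> v j = w j) -> Gt Rf Rpsi n F0 v i = Gt Rf Rpsi n F0 w i.
Proof. intros H. destruct (recon_ext n F0 v w H) as [A [B C]]. unfold Gt. rewrite A, B, C. auto. Qed.
Lemma Efun_ext n F0 v w x : (forall j, (j < DD n)%nat -> v j = w j) -> Efun n F0 v x = Efun n F0 w x.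
Proof. intros H. destruct (recon_ext n F0 v w H) as [A [B C]]. unfold Efun. rewrite A, B. auto. Qed.

Lemma is_derive_sq (f : R -> R) s df : is_derive f s df -> is_derive (fun t => f t * f t) s (2 * f s * df).
Proof.
  intros H. assert (H2 := is_derive_mult f f s df df H H (fun a b => Rmult_comm a b)).
  eapply is_derive_ext; [|replace (2 * f s * df) with (plus (mult df (f s)) (mult (f s) df)); [exact H2|]].
  intros; reflexivity. unfold plus, mult; simpl. ring.
Qed.

Lemma is_derive_cR (c s : R) : is_derive (fun _ : R => c) s 0.
Proof. apply (is_derive_const (K:=R_AbsRing) (V:=R_NormedModule)). Qed.

Lemma dE_along Rf Rpsi Rphi n F0 (u : nat -> R -> R) s x : SysOK Rf Rpsi Rphi -> F0 <> 0 ->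
  (forall i, (i < DD n)%nat -> is_derive (u i) s (Gt Rf Rpsi n F0 (fun j => u j s) i)) ->
  is_derive (fun t => Efun n F0 (fun j => u j t) x) s 0.
Proof.
  intros HS HF Hd. set (v := fun j => u j s).
  assert (DF : is_derive (fun t => hp (fun k => fst (fC n F0 (fun j => u j t) k)) (S n) x) s (hp (FD Rf Rpsi n F0 v) (S n) x)).
  { apply (is_derive_hp (fun k t => fst (fC n F0 (fun j => u j t) k))). intros k Hk. unfold FD, fC.
    destruct (k <=? n)%nat eqn:E. apply Nat.leb_le in E. apply Hd. unfold DD; lia.
    destruct (k =? S n)%nat; apply is_derive_cR. }
  assert (DP : is_derive (fun t => hp (fun k => fst (psiC n (fun j => u j t) k)) n x) s (hp (fun l => Gt Rf Rpsi n F0 v (S n + l)) n x)).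
  { apply (is_derive_hp (fun k t => fst (psiC n (fun j => u j t) k))). intros k Hk. unfold psiC.
    replace (k <=? n)%nat with true by (symmetry; apply Nat.leb_le; lia). apply Hd. unfold DD; lia. }
  assert (DQ : is_derive (fun t => hp (fun k => snd (psiC n (fun j => u j t) k)) n x) s (hp (fun l => Gt Rf Rpsi n F0 v (S n + S n + l)) n x)).
  { apply (is_derive_hp (fun k t => snd (psiC n (fun j => u j t) k))). intros k Hk. unfold psiC.
    replace (k <=? n)%nat with true by (symmetry; apply Nat.leb_le; lia). apply Hd. unfold DD; lia. }
  apply is_derive_sq in DF. apply is_derive_sq in DP. apply is_derive_sq in DQ.
  assert (H := is_derive_plus _ _ s _ _ (is_derive_plus _ _ s _ _ DF DP) DQ).
  unfold Efun. eapply is_derive_ext; [|replace 0 with (plus (plus (2 * hp (fun k => fst (fC n F0 v k)) (S n) x * hp (FD Rf Rpsi n F0 v) (S n) x)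
      (2 * hp (fun k => fst (psiC n v k)) n x * hp (fun l => Gt Rf Rpsi n F0 v (S n + l)) n x))
      (2 * hp (fun k => snd (psiC n v k)) n x * hp (fun l => Gt Rf Rpsi n F0 v (S n + S n + l)) n x)); [exact H|]].
  intros; reflexivity.
  exact (dE_zero Rf Rpsi Rphi n F0 v x HS HF).
Qed.

Lemma Efun_nonneg n F0 v x : 0 <= Efun n F0 v x.
Proof. unfold Efun. set (a := hp _ (S n) x). set (b := hp _ n x). set (c := hp (fun k => snd _) n x). nra. Qed.

Lemma cont_of_derive (g : R -> R) s d : is_derive g s d -> continuity_pt g s.
Proof. intros H. apply continuity_pt_filterlim. apply (ex_derive_continuous g s). exists d. exact H. Qed.

Lemma real_C (z : C) : snd z = 0 -> RtoC (fst z) = z.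
Proof. destruct z; simpl; intros ->; auto. Qed.

Lemma is_derive_Ropp (f : R -> R) s d : is_derive f s d -> is_derive (fun t => - f t) s (- d).
Proof. intros H. apply (is_derive_opp f s d H). Qed.

Theorem generic (Rf Rpsi Rphi : Sys) n (f0 psi0 phi0 : nat -> C) :
  SysOK Rf Rpsi Rphi ->
  (forall F0 Rb j, goodC (DD n) Rb (fun v => Rf n (fC n F0 v) (psiC n v) (phiC n v) j)) ->
  (forall F0 Rb j, goodC (DD n) Rb (fun v => Rpsi n (fC n F0 v) (psiC n v) (phiC n v) j)) ->
  f0 (S n) <> 0%C ->
  (forall j, (j <= S n)%nat -> f0 j = Cconj (f0 j)) ->
  (forall l, (l <= n)%nat -> phi0 l = (- Cconj (psi0 l))%C) ->
  exists f psi phi : nat -> R -> C,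
      global_solution n Rf Rpsi Rphi f0 psi0 phi0 f psi phi /\
      symmetric_solution n f psi phi.
Proof.
  intros HS Hgf Hgp Hf0 Hcf Hcp.
  assert (Hsnd : forall j, (j <= S n)%nat -> snd (f0 j) = 0).
  { intros j Hj. specialize (Hcf j Hj). apply (f_equal snd) in Hcf. simpl in Hcf. lra. }
  set (F0 := fst (f0 (S n))).
  assert (Ef0 : f0 (S n) = RtoC F0). { rewrite (C_eta (f0 (S n))). rewrite Hsnd by lia. auto. }
  assert (HF0 : F0 <> 0). { intros E. apply Hf0. rewrite Ef0, E. auto. }
  set (D := DD n).
  set (v0 := fun i => if (i <=? n)%nat then fst (f0 i) else if (i <=? S n + n)%nat then fst (psi0 (i - S n)%nat) else snd (psi0 (i - (S n + S n))%nat)).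
  destruct (box_of_E n F0) as [K [HK Hbox]].
  set (Bs := sumD (S (S n)) (fun m => Efun n F0 v0 (INR m))).
  assert (HBs : 0 <= Bs) by (apply sumD_nonneg; intros; apply Efun_nonneg).
  assert (HE0 : forall m, (m <= S n)%nat -> Efun n F0 v0 (INR m) <= Bs).
  { intros m Hm. apply (sumD_single _ (fun m => Efun n F0 v0 (INR m))). lia. intros; apply Efun_nonneg. }
  set (B0 := K * (1 + Bs)). assert (HB0 : 0 <= B0) by (unfold B0; nra).
  set (Rb := B0 + 1). assert (HRb : 0 <= Rb) by (unfold Rb; lra).
  destruct (good_unif D Rb (fun i v => Gt Rf Rpsi n F0 v i)) as [L [M [HL [HM Hunif]]]].
  { intros i _. apply good_Gt; auto. }
  set (G := fun v i => Gt Rf Rpsi n F0 (clip Rb v) i).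
  assert (HLip : LipG D G (L+1)).
  { intros i v w Hi. unfold G. destruct (Hunif i Hi) as [A _]. eapply Rle_trans. apply A; apply clip_box; auto.
    assert (0 <= sumD D (fun j => Rabs (v j - w j))) by (apply sumD_nonneg; intros; apply Rabs_pos).
    apply Rle_trans with (L * sumD D (fun j => Rabs (v j - w j))). apply Rmult_le_compat_l; auto.
    apply sumD_le. intros; apply clip_lip; auto. nra. }
  assert (HBnd : BndG D G M).
  { intros i v Hi. unfold G. destruct (Hunif i Hi) as [_ B]. apply B. apply clip_box; auto. }
  destruct (ode_global D G (L+1) M v0 HLip HBnd ltac:(lra) HM) as [u [Hu0 [Hud Hul]]].
  set (h := / (M + 1)). assert (Hh : 0 < h) by (unfold h; apply Rinv_0_lt_compat; lra).
  assert (HMh : M * h < 1). { unfold h. apply Rmult_lt_reg_r with (M+1). lra. rewrite Rmult_assoc, Rinv_l by lra. lra. }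
  set (P := fun tau => forall m, (m <= S n)%nat -> Efun n F0 (fun j => u j tau) (INR m) = Efun n F0 v0 (INR m)).
  assert (Hnear : forall tau t, P tau -> Rabs (t - tau) <= h -> inbox D Rb (fun j => u j t)).
  { intros tau t Ht Hd i Hi. assert (Hb := Hbox (fun j => u j tau) Bs). 
    assert (inbox (DD n) B0 (fun j => u j tau)). { apply Hb. intros m Hm. rewrite Ht by auto. auto. }
    specialize (H i Hi). simpl in H. specialize (Hul i t tau Hi).
    replace (u i t) with ((u i t - u i tau) + u i tau) by ring. eapply Rle_trans. apply Rabs_triang.
    assert (M * Rabs (t - tau) <= M * h) by (apply Rmult_le_compat_l; auto). unfold Rb. lra. }
  assert (Htrue : forall t, inbox D Rb (fun j => u j t) -> forall i, (i < D)%nat -> is_derive (u i) t (Gt Rf Rpsi n F0 (fun j => u j t) i)).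
  { intros t Hb i Hi. replace (Gt Rf Rpsi n F0 (fun j => u j t) i) with (G (fun j => u j t) i). apply Hud; auto.
    unfold G. apply Gt_ext. intros j Hj. apply (clip_id D); auto. }
  assert (Hstep : forall tau t, P tau -> Rabs (t - tau) <= h -> P t).
  { intros tau t Ht Hd m Hm. rewrite <- (Ht m Hm).
    assert (Hder : forall s, Rmin tau t <= s <= Rmax tau t -> is_derive (fun s => Efun n F0 (fun j => u j s) (INR m)) s 0).
    { intros s Hs. apply (dE_along Rf Rpsi Rphi); auto. apply Htrue. apply (Hnear tau s Ht).
      unfold Rmin, Rmax in Hs. destruct Rle_dec; unfold Rabs in *; repeat destruct Rcase_abs; lra. }
    destruct (MVT_gen (fun s => Efun n F0 (fun j => u j s) (INR m)) tau t (fun _ => 0)) as [c [_ Hc]].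
    intros s Hs. apply Hder. lra. intros s Hs. apply (cont_of_derive _ _ 0). apply Hder; auto.
    lra. }
  assert (HP0 : P 0). { intros m Hm. apply Efun_ext. intros; apply Hu0; auto. }
  assert (Hfw : forall N t, 0 <= t <= INR N * h -> P t).
  { induction N; intros t Ht. simpl in Ht. replace t with 0 by lra. auto.
    destruct (Rle_or_lt t (INR N * h)). apply IHN. lra.
    apply (Hstep (INR N * h)). apply IHN. split; [|lra]. assert (0 <= INR N) by apply pos_INR. nra.
    rewrite S_INR in Ht. rewrite Rabs_right; lra. }
  assert (Hbw : forall N t, - (INR N * h) <= t <= 0 -> P t).
  { induction N; intros t Ht. simpl in Ht. replace t with 0 by lra. auto.
    destruct (Rle_or_lt (- (INR N * h)) t). apply IHN. lra.
    apply (Hstep (- (INR N * h))). apply IHN. split; [lra|]. assert (0 <= INR N) by apply pos_INR. nra.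
    rewrite S_INR in Ht. rewrite Rabs_left; lra. }
  assert (HPall : forall t, P t).
  { intros t. destruct (INR_archimed h (Rabs t) ltac:(lra)) as [N HN].
    destruct (Rle_or_lt 0 t). apply (Hfw N). rewrite Rabs_right in HN; lra. apply (Hbw N). rewrite Rabs_left in HN; lra. }
  assert (Hsol : forall t i, (i < D)%nat -> is_derive (u i) t (Gt Rf Rpsi n F0 (fun j => u j t) i)).
  { intros t i Hi. apply Htrue; auto. apply (Hnear t t (HPall t)). unfold Rminus; rewrite Rplus_opp_r, Rabs_R0; lra. }
  assert (Hv0f : forall j, (j <= n)%nat -> v0 j = fst (f0 j)).
  { intros j Hj. unfold v0. replace (j <=? n)%nat with true by (symmetry; apply Nat.leb_le; lia). auto. }
  assert (Hv0p : forall l, (l <= n)%nat -> v0 (S n + l)%nat = fst (psi0 l)).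
  { intros l Hl. unfold v0. replace (S n + l <=? n)%nat with false by (symmetry; apply Nat.leb_gt; lia).
    replace (S n + l <=? S n + n)%nat with true by (symmetry; apply Nat.leb_le; lia). f_equal. f_equal. lia. }
  assert (Hv0q : forall l, (l <= n)%nat -> v0 (S n + S n + l)%nat = snd (psi0 l)).
  { intros l Hl. unfold v0. replace (S n + S n + l <=? n)%nat with false by (symmetry; apply Nat.leb_gt; lia).
    replace (S n + S n + l <=? S n + n)%nat with false by (symmetry; apply Nat.leb_gt; lia). f_equal. f_equal. lia. }
  exists (fun j t => fC n F0 (fun i => u i t) j), (fun l t => psiC n (fun i => u i t) l), (fun l t => phiC n (fun i => u i t) l).
  split.
  - unfold global_solution. split; [|split; [|split; [|split; [|split; [|split]]]]].
    + intros j Hj. unfold fC. destruct (j <=? n)%nat eqn:E.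
      * apply Nat.leb_le in E. rewrite Hu0 by (unfold D, DD; lia). rewrite Hv0f by auto. apply real_C. apply Hsnd; lia.
      * apply Nat.leb_gt in E. replace j with (S n) by lia. rewrite Nat.eqb_refl. auto.
    + intros l Hl. unfold psiC, phiC. replace (l <=? n)%nat with true by (symmetry; apply Nat.leb_le; lia).
      rewrite !Hu0 by (unfold D, DD; lia). rewrite Hv0p, Hv0q by auto. split.
      * symmetry; apply C_eta.
      * rewrite Hcp by auto. unfold Copp, Cconj; simpl. f_equal; ring.
    + intros j s Hj. unfold fC. replace (j <=? n)%nat with false by (symmetry; apply Nat.leb_gt; lia).
      replace (j =? S n)%nat with false by (symmetry; apply Nat.eqb_neq; lia). auto.
    + intros l s Hl. unfold psiC, phiC. replace (l <=? n)%nat with false by (symmetry; apply Nat.leb_gt; lia). auto.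
    + intros s. rewrite fC_Sn. intros E. apply HF0. apply (f_equal fst) in E. auto.
    + intros j s Hj.
      destruct (recon_sym n F0 (fun i => u i s) HF0) as [H1 [H2 [H3 [H4 [H5 H6]]]]].
      destruct (HS n _ _ _ H1 H2 H3 H4 H5 H6) as [S1 [S2 [S3 _]]].
      destruct (Compare_dec.le_lt_dec j n) as [Hjn|Hjn].
      * assert (H := is_derive_pair (u j) (fun _ => 0) s _ _ (Hsol s j ltac:(unfold D, DD; lia)) (is_derive_cR 0 s)).
        rewrite Gt_f in H by auto.
        assert (Hz := S1 j). apply (f_equal snd) in Hz. simpl in Hz.
        assert (Hz' : snd (Rf n (fC n F0 (fun i => u i s)) (psiC n (fun i => u i s)) (phiC n (fun i => u i s)) j) = 0) by lra.
        change ((fst (Rf n (fC n F0 (fun i => u i s)) (psiC n (fun i => u i s)) (phiC n (fun i => u i s)) j), 0) : C)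
          with (RtoC (fst (Rf n (fC n F0 (fun i => u i s)) (psiC n (fun i => u i s)) (phiC n (fun i => u i s)) j))) in H.
        rewrite real_C in H by exact Hz'.
        eapply is_derive_ext; [|exact H]. intros t. simpl. unfold fC. replace (j <=? n)%nat with true by (symmetry; apply Nat.leb_le; lia). auto.
      * replace j with (S n) by lia.
        assert (H := is_derive_pair (fun _ => F0) (fun _ => 0) s _ _ (is_derive_cR F0 s) (is_derive_cR 0 s)).
        match type of H with is_derive _ _ ?d =>
          assert (E : d = Rf n (fC n F0 (fun i => u i s)) (psiC n (fun i => u i s)) (phiC n (fun i => u i s)) (S n)) by (rewrite S3; reflexivity) end.
        rewrite E in H. eapply is_derive_ext; [|exact H]. intros t. simpl. rewrite fC_Sn. auto.
    + intros l s Hl.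
      destruct (recon_sym n F0 (fun i => u i s) HF0) as [H1 [H2 [H3 [H4 [H5 H6]]]]].
      destruct (HS n _ _ _ H1 H2 H3 H4 H5 H6) as [S1 [S2 [S3 _]]].
      assert (Hp := Hsol s (S n + l)%nat ltac:(unfold D, DD; lia)). rewrite Gt_p in Hp by auto.
      assert (Hq := Hsol s (S n + S n + l)%nat ltac:(unfold D, DD; lia)). rewrite Gt_q in Hq by auto.
      split.
      * assert (H := is_derive_pair _ _ s _ _ Hp Hq). rewrite <- C_eta in H.
        eapply is_derive_ext; [|exact H]. intros t. simpl. unfold psiC. replace (l <=? n)%nat with true by (symmetry; apply Nat.leb_le; lia). auto.
      * assert (H := is_derive_pair _ _ s _ _ (is_derive_Ropp _ _ _ Hp) Hq).
        match type of H with is_derive _ _ ?d =>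
          assert (E : d = Rphi n (fC n F0 (fun i => u i s)) (psiC n (fun i => u i s)) (phiC n (fun i => u i s)) l)
          by (rewrite S2; unfold Copp, Cconj; simpl; f_equal; ring) end.
        rewrite E in H. eapply is_derive_ext; [|exact H]. intros t. simpl. unfold phiC. replace (l <=? n)%nat with true by (symmetry; apply Nat.leb_le; lia). auto.
  - split.
    + intros j s _. destruct (recon_sym n F0 (fun i => u i s) HF0) as [_ [H2 _]]. rewrite H2. auto.
    + intros l s _. destruct (recon_sym n F0 (fun i => u i s) HF0) as [_ [_ [H3 _]]]. rewrite H3. ring.
Qed.

Theorem lemma2 (n : nat) (f0 psi0 phi0 : nat -> C) :
  f0 (S n) <> 0%C ->
  (forall j, (j <= S n)%nat -> f0 j = Cconj (f0 j)) ->
  (forall l, (l <= n)%nat -> phi0 l = (- Cconj (psi0 l))%C) ->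
  (exists f psi phi : nat -> R -> C,
      global_solution n rhs_t_f rhs_t_psi rhs_t_phi f0 psi0 phi0 f psi phi /\
      symmetric_solution n f psi phi) /\
  (exists f psi phi : nat -> R -> C,
      global_solution n rhs_x_f rhs_x_psi rhs_x_phi f0 psi0 phi0 f psi phi /\
      symmetric_solution n f psi phi).
Proof.
  intros H1 H2 H3. split.
  - apply generic; auto. apply SysOK_t.
    intros; apply good_t. intros; apply good_t.
  - apply generic; auto. apply SysOK_x.
    intros; apply good_x. intros; apply good_x.
Qed.
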